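(* There exists a topologically regular compact connected set $K\subseteq\mathbb{R}^2$ whose interior $\mathring K$ is not Whitney regular but such that $C^1_{\mathrm{int}}(K)=C^1(K)=C^1(\mathbb{R}^2|K)$. (For instance, $K=\overline\Omega$ where $\Omega$ is the open unit disc from which pairwise disjoint small closed balls accumulating exactly at the segment $\{0\}\times[-\tfrac12,\tfrac12]$ are removed.)
   Context: $K$ is topologically regular if it is the closure of its interior $\mathring K$. A set $S$ is Whitney regular if there is $C>0$ such that any two points $x,y\in S$ can be joined by a rectifiable path in $S$ of length at most $C|x-y|$. $C^1_{\mathrm{int}}(K)$ is the set of $f\in C^1(\mathring K)$ such that $f$ and $df$ extend continuously to $K$ (identified with these extensions). $C^1(K)$ is the set of $f:K\to\mathbb{R}$ admitting a continuous $df:K\to\mathbb{R}^2$ with $\lim_{y\to x,\,y\in K\setminus\{x\}}\frac{f(y)-f(x)-\langle df(x),y-x\rangle}{|y-x|}=0$ for all $x\in K$. $C^1(\mathbb{R}^2|K)=\{g|_K:g\in C^1(\mathbb{R}^2)\}$. *)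

(* Defs.v *)
From Stdlib Require Import Reals Lra List.
Open Scope R_scope.

Definition R2 : Type := (R * R)%type.

Definition dist2 (p q : R2) : R :=
  sqrt ((fst p - fst q) ^ 2 + (snd p - snd q) ^ 2).

Definition inner2 (p q : R2) : R := fst p * fst q + snd p * snd q.

Definition sub2 (p q : R2) : R2 := (fst p - fst q, snd p - snd q).

Definition interior2 (A : R2 -> Prop) (x : R2) : Prop :=
  exists r, 0 < r /\ forall y, dist2 x y < r -> A y.

Definition closure2 (A : R2 -> Prop) (x : R2) : Prop :=
  forall r, 0 < r -> exists y, A y /\ dist2 x y < r.

Definition is_open (U : R2 -> Prop) : Prop := forall x, U x -> interior2 U x.

Definition compact2 (K : R2 -> Prop) : Prop :=
  forall (I : Type) (U : I -> R2 -> Prop),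
    (forall i, is_open (U i)) ->
    (forall x, K x -> exists i, U i x) ->
    exists l : list I, forall x, K x -> exists i, In i l /\ U i x.

Definition connected2 (K : R2 -> Prop) : Prop :=
  forall U V : R2 -> Prop, is_open U -> is_open V ->
    (forall x, K x -> U x \/ V x) ->
    (forall x, K x -> U x -> V x -> False) ->
    (forall x, K x -> U x) \/ (forall x, K x -> V x).

Definition topologically_regular (K : R2 -> Prop) : Prop :=
  forall x, K x <-> closure2 (interior2 K) x.

Fixpoint poly_length (gamma : R -> R2) (t0 : R) (ts : list R) : R :=
  match ts with
  | nil => 0
  | t1 :: ts' => dist2 (gamma t0) (gamma t1) + poly_length gamma t1 ts'
  end.

Fixpoint increasing_from (t0 : R) (ts : list R) : Prop :=
  match ts with
  | nil => True
  | t1 :: ts' => t0 <= t1 /\ increasing_from t1 ts'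
  end.

Definition continuous_path (gamma : R -> R2) : Prop :=
  forall t, 0 <= t <= 1 -> forall eps, 0 < eps -> exists delta, 0 < delta /\
    forall s, 0 <= s <= 1 -> Rabs (s - t) < delta -> dist2 (gamma s) (gamma t) < eps.

(* gamma : [0,1] -> S is a path from x to y, rectifiable of length <= L
   (length = sup of inscribed polygonal lengths). *)
Definition rect_path_in (S : R2 -> Prop) (x y : R2) (L : R) (gamma : R -> R2) : Prop :=
  continuous_path gamma /\ gamma 0 = x /\ gamma 1 = y /\
  (forall t, 0 <= t <= 1 -> S (gamma t)) /\
  (forall t0 ts, 0 <= t0 -> increasing_from t0 ts -> Forall (fun t => t <= 1) ts ->
     poly_length gamma t0 ts <= L).

Definition whitney_regular (S : R2 -> Prop) : Prop :=
  exists C, 0 < C /\ forall x y, S x -> S y ->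
    exists gamma, rect_path_in S x y (C * dist2 x y) gamma.

Definition has_grad_within (A : R2 -> Prop) (f : R2 -> R) (d : R2) (x : R2) : Prop :=
  forall eps, 0 < eps -> exists delta, 0 < delta /\
    forall y, A y -> y <> x -> dist2 y x < delta ->
      Rabs (f y - f x - inner2 d (sub2 y x)) <= eps * dist2 y x.

Definition cont_within {Y : Type} (dY : Y -> Y -> R)
    (A : R2 -> Prop) (g : R2 -> Y) (x : R2) : Prop :=
  forall eps, 0 < eps -> exists delta, 0 < delta /\
    forall y, A y -> dist2 y x < delta -> dY (g y) (g x) < eps.

Definition Rdist (a b : R) : R := Rabs (a - b).

Definition C1_plane (g : R2 -> R) : Prop :=
  exists dg : R2 -> R2, forall x,
    has_grad_within (fun _ => True) g (dg x) x /\
    cont_within dist2 (fun _ => True) dg x.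

(* C^1_int(K): f in C^1 of the interior2, with f and df extending continuously
   to K (the extensions being identified with f and some df on K). *)
Definition C1_int (K : R2 -> Prop) (f : R2 -> R) : Prop :=
  exists df : R2 -> R2,
    (forall x, interior2 K x -> has_grad_within (fun _ => True) f (df x) x) /\
    (forall x, K x -> cont_within Rdist K f x) /\
    (forall x, K x -> cont_within dist2 K df x).

Definition C1_K (K : R2 -> Prop) (f : R2 -> R) : Prop :=
  exists df : R2 -> R2, forall x, K x ->
    has_grad_within K f (df x) x /\ cont_within dist2 K df x.

Definition C1_restr (K : R2 -> Prop) (f : R2 -> R) : Prop :=
  exists g : R2 -> R, C1_plane g /\ forall x, K x -> g x = f x.

(* Main.v *)
Require Import Defs.
From Stdlib Require Import Reals Lra Lia List Classical.
Open Scope R_scope.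

Lemma abs_sqrt_sq a : Rabs a = sqrt (a ^ 2).
Proof. rewrite <- pow2_abs. rewrite sqrt_pow2; auto using Rabs_pos. Qed.

Lemma sq_nonneg a : 0 <= a ^ 2.
Proof. nra. Qed.

Lemma dist2_nonneg p q : 0 <= dist2 p q.
Proof. unfold dist2. apply sqrt_pos. Qed.

Lemma dist2_sym p q : dist2 p q = dist2 q p.
Proof. unfold dist2. f_equal. ring. Qed.

Lemma dist2_fst p q : Rabs (fst p - fst q) <= dist2 p q.
Proof.
  unfold dist2. rewrite abs_sqrt_sq. apply sqrt_le_1_alt.
  pose proof (sq_nonneg (snd p - snd q)). lra.
Qed.

Lemma dist2_snd p q : Rabs (snd p - snd q) <= dist2 p q.
Proof.
  unfold dist2. rewrite abs_sqrt_sq. apply sqrt_le_1_alt.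
  pose proof (sq_nonneg (fst p - fst q)). lra.
Qed.

Lemma sqrt_le_of_sq X Y : 0 <= Y -> X <= Y ^ 2 -> sqrt X <= Y.
Proof.
  intros HY H. rewrite <- (sqrt_pow2 Y HY). apply sqrt_le_1_alt. exact H.
Qed.

Lemma dist2_L1 p q : dist2 p q <= Rabs (fst p - fst q) + Rabs (snd p - snd q).
Proof.
  unfold dist2. apply sqrt_le_of_sq.
  - pose proof (Rabs_pos (fst p - fst q)); pose proof (Rabs_pos (snd p - snd q)); lra.
  - rewrite <- (pow2_abs (fst p - fst q)). rewrite <- (pow2_abs (snd p - snd q)).
    pose proof (Rabs_pos (fst p - fst q)); pose proof (Rabs_pos (snd p - snd q)); nra.
Qed.

Lemma sqrt_sq_eq X : 0 <= X -> sqrt X * sqrt X = X.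
Proof. apply sqrt_sqrt. Qed.

Lemma cs_ineq u1 u2 v1 v2 :
  u1 * v1 + u2 * v2 <= sqrt (u1 ^ 2 + u2 ^ 2) * sqrt (v1 ^ 2 + v2 ^ 2).
Proof.
  pose proof (sqrt_pos (u1 ^ 2 + u2 ^ 2)) as Hu.
  pose proof (sqrt_pos (v1 ^ 2 + v2 ^ 2)) as Hv.
  pose proof (sqrt_sq_eq (u1 ^ 2 + u2 ^ 2) ltac:(nra)) as Eu.
  pose proof (sqrt_sq_eq (v1 ^ 2 + v2 ^ 2) ltac:(nra)) as Ev.
  set (a := sqrt (u1 ^ 2 + u2 ^ 2)) in *. set (b := sqrt (v1 ^ 2 + v2 ^ 2)) in *.
  assert (H : (u1 * v1 + u2 * v2) ^ 2 <= (a * b) ^ 2).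
  { replace ((a * b) ^ 2) with ((a * a) * (b * b)) by ring. rewrite Eu, Ev.
    assert (0 <= (u1 * v2 - u2 * v1) ^ 2) by apply sq_nonneg. nra. }
  assert (0 <= a * b) by nra.
  destruct (Rle_or_lt (u1 * v1 + u2 * v2) 0); [nra|].
  nra.
Qed.

Lemma norm_tri u1 u2 v1 v2 :
  sqrt ((u1 + v1) ^ 2 + (u2 + v2) ^ 2) <= sqrt (u1 ^ 2 + u2 ^ 2) + sqrt (v1 ^ 2 + v2 ^ 2).
Proof.
  pose proof (sqrt_pos (u1 ^ 2 + u2 ^ 2)) as Hu.
  pose proof (sqrt_pos (v1 ^ 2 + v2 ^ 2)) as Hv.
  pose proof (sqrt_sq_eq (u1 ^ 2 + u2 ^ 2) ltac:(nra)) as Eu.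
  pose proof (sqrt_sq_eq (v1 ^ 2 + v2 ^ 2) ltac:(nra)) as Ev.
  pose proof (cs_ineq u1 u2 v1 v2) as C.
  apply sqrt_le_of_sq; [lra|].
  set (a := sqrt (u1 ^ 2 + u2 ^ 2)) in *. set (b := sqrt (v1 ^ 2 + v2 ^ 2)) in *.
  nra.
Qed.

Lemma dist2_tri p q r : dist2 p r <= dist2 p q + dist2 q r.
Proof.
  unfold dist2.
  replace (fst p - fst r) with ((fst p - fst q) + (fst q - fst r)) by ring.
  replace (snd p - snd r) with ((snd p - snd q) + (snd q - snd r)) by ring.
  apply norm_tri.
Qed.

Lemma dist2_refl p : dist2 p p = 0.
Proof. unfold dist2. replace ((fst p - fst p) ^ 2 + (snd p - snd p) ^ 2) with 0 by ring. apply sqrt_0. Qed.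

Lemma dist2_pos p q : p <> q -> 0 < dist2 p q.
Proof.
  intros H. destruct (Rle_lt_or_eq_dec 0 (dist2 p q) (dist2_nonneg p q)) as [|E]; auto.
  exfalso. apply H. unfold dist2 in E. symmetry in E.
  apply sqrt_eq_0 in E; [|pose proof (sq_nonneg (fst p - fst q)); pose proof (sq_nonneg (snd p - snd q)); lra].
  destruct p as [p1 p2], q as [q1 q2]; simpl in *.
  pose proof (sq_nonneg (p1 - q1)); pose proof (sq_nonneg (p2 - q2)).
  assert ((p1 - q1) ^ 2 = 0) by lra. assert ((p2 - q2) ^ 2 = 0) by lra.
  assert (p1 - q1 = 0) by nra. assert (p2 - q2 = 0) by nra.
  assert (p1 = q1) by lra. assert (p2 = q2) by lra. subst; auto.
Qed.

Definition nL (d : R2) := Rabs (fst d) + Rabs (snd d).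

Lemma nL_nonneg d : 0 <= nL d.
Proof. unfold nL. pose proof (Rabs_pos (fst d)); pose proof (Rabs_pos (snd d)); lra. Qed.

Lemma inner_bound d y x : Rabs (inner2 d (sub2 y x)) <= nL d * dist2 y x.
Proof.
  unfold inner2, sub2, nL; simpl.
  pose proof (dist2_fst y x); pose proof (dist2_snd y x).
  eapply Rle_trans; [apply Rabs_triang|].
  rewrite !Rabs_mult.
  pose proof (Rabs_pos (fst d)); pose proof (Rabs_pos (snd d)). nra.
Qed.

Notation HG := has_grad_within.

Lemma HG_ext A f g d x : (forall y, A y -> f y = g y) -> f x = g x -> HG A f d x -> HG A g d x.
Proof.
  intros E Ex H eps He. destruct (H eps He) as [del [Hd Hy]]. exists del; split; auto.
  intros y Ay Hyx Hdy. rewrite <- (E y Ay), <- Ex. auto.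
Qed.

Lemma HG_sub (A B : R2 -> Prop) f d x : (forall y, B y -> A y) -> HG A f d x -> HG B f d x.
Proof.
  intros S H eps He. destruct (H eps He) as [del [Hd Hy]]. exists del; split; auto.
Qed.

Lemma HG_union (A B : R2 -> Prop) f d x : HG A f d x -> HG B f d x -> HG (fun y => A y \/ B y) f d x.
Proof.
  intros H1 H2 eps He. destruct (H1 eps He) as [d1 [Hd1 Hy1]]. destruct (H2 eps He) as [d2 [Hd2 Hy2]].
  exists (Rmin d1 d2); split; [apply Rmin_pos; auto|].
  intros y [Ay|Ay] Hyx Hdy.
  - apply Hy1; auto. eapply Rlt_le_trans; [exact Hdy| apply Rmin_l].
  - apply Hy2; auto. eapply Rlt_le_trans; [exact Hdy| apply Rmin_r].
Qed.

Lemma HG_far (A : R2 -> Prop) f d x r : 0 < r -> (forall y, A y -> r <= dist2 y x) -> HG A f d x.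
Proof.
  intros Hr F eps He. exists r; split; auto. intros y Ay _ Hd. specialize (F y Ay). lra.
Qed.

Lemma HG_open (A : R2 -> Prop) f d x r : 0 < r -> (forall y, dist2 x y < r -> A y) ->
  HG A f d x -> HG (fun _ => True) f d x.
Proof.
  intros Hr F H eps He. destruct (H eps He) as [del [Hd Hy]].
  exists (Rmin del r); split; [apply Rmin_pos; auto|].
  intros y _ Hyx Hdy. apply Hy; auto.
  - apply F. rewrite dist2_sym. eapply Rlt_le_trans; [exact Hdy| apply Rmin_r].
  - eapply Rlt_le_trans; [exact Hdy| apply Rmin_l].
Qed.

Lemma HG_const A c x : HG A (fun _ => c) (0, 0) x.
Proof.
  intros eps He. exists 1; split; [lra|]. intros y _ _ _.
  unfold inner2, sub2; simpl. replace (c - c - (0 * (fst y - fst x) + 0 * (snd y - snd x))) with 0 by ring.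
  rewrite Rabs_R0. pose proof (dist2_nonneg y x). nra.
Qed.

Lemma HG_fst A x : HG A (fun y => fst y) (1, 0) x.
Proof.
  intros eps He. exists 1; split; [lra|]. intros y _ _ _.
  unfold inner2, sub2; simpl. replace (fst y - fst x - (1 * (fst y - fst x) + 0 * (snd y - snd x))) with 0 by ring.
  rewrite Rabs_R0. pose proof (dist2_nonneg y x). nra.
Qed.

Lemma HG_snd A x : HG A (fun y => snd y) (0, 1) x.
Proof.
  intros eps He. exists 1; split; [lra|]. intros y _ _ _.
  unfold inner2, sub2; simpl. replace (snd y - snd x - (0 * (fst y - fst x) + 1 * (snd y - snd x))) with 0 by ring.
  rewrite Rabs_R0. pose proof (dist2_nonneg y x). nra.
Qed.

Lemma HG_plus A f g d e x : HG A f d x -> HG A g e x ->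
  HG A (fun y => f y + g y) (fst d + fst e, snd d + snd e) x.
Proof.
  intros H1 H2 eps He.
  destruct (H1 (eps/2) ltac:(lra)) as [d1 [Hd1 Hy1]]. destruct (H2 (eps/2) ltac:(lra)) as [d2 [Hd2 Hy2]].
  exists (Rmin d1 d2); split; [apply Rmin_pos; auto|].
  intros y Ay Hyx Hdy.
  assert (dist2 y x < d1) by (eapply Rlt_le_trans; [exact Hdy| apply Rmin_l]).
  assert (dist2 y x < d2) by (eapply Rlt_le_trans; [exact Hdy| apply Rmin_r]).
  specialize (Hy1 y Ay Hyx H). specialize (Hy2 y Ay Hyx H0).
  unfold inner2, sub2 in *; simpl in *.
  replace (f y + g y - (f x + g x) - ((fst d + fst e) * (fst y - fst x) + (snd d + snd e) * (snd y - snd x)))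
    with ((f y - f x - (fst d * (fst y - fst x) + snd d * (snd y - snd x))) +
          (g y - g x - (fst e * (fst y - fst x) + snd e * (snd y - snd x)))) by ring.
  eapply Rle_trans; [apply Rabs_triang|]. lra.
Qed.

Lemma HG_scal A f d x c : HG A f d x -> HG A (fun y => c * f y) (c * fst d, c * snd d) x.
Proof.
  intros H eps He.
  destruct (H (eps / (Rabs c + 1))) as [d1 [Hd1 Hy1]].
  { apply Rdiv_lt_0_compat; auto. pose proof (Rabs_pos c); lra. }
  exists d1; split; auto. intros y Ay Hyx Hdy. specialize (Hy1 y Ay Hyx Hdy).
  unfold inner2, sub2 in *; simpl in *.
  replace (c * f y - c * f x - (c * fst d * (fst y - fst x) + c * snd d * (snd y - snd x)))
    with (c * (f y - f x - (fst d * (fst y - fst x) + snd d * (snd y - snd x)))) by ring.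
  rewrite Rabs_mult. pose proof (Rabs_pos c). pose proof (dist2_nonneg y x).
  apply Rle_trans with (Rabs c * (eps / (Rabs c + 1) * dist2 y x)).
  { apply Rmult_le_compat_l; auto. }
  assert (Rabs c * (eps / (Rabs c + 1)) <= eps).
  { unfold Rdiv. rewrite <- Rmult_assoc. apply Rle_trans with ((Rabs c + 1) * eps * / (Rabs c + 1)).
    - apply Rmult_le_compat_r. left; apply Rinv_0_lt_compat; lra. nra.
    - right. field. lra. }
  nra.
Qed.

Lemma HG_lip A f d x : HG A f d x -> exists del, 0 < del /\ forall y, A y -> dist2 y x < del ->
  Rabs (f y - f x) <= (nL d + 1) * dist2 y x.
Proof.
  intros H. destruct (H 1 ltac:(lra)) as [del [Hd Hy]]. exists del; split; auto.
  intros y Ay Hdy. destruct (Classical_Prop.classic (y = x)) as [E|N].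
  - subst. rewrite dist2_refl. replace (f x - f x) with 0 by ring. rewrite Rabs_R0. lra.
  - specialize (Hy y Ay N Hdy). pose proof (inner_bound d y x).
    replace (f y - f x) with ((f y - f x - inner2 d (sub2 y x)) + inner2 d (sub2 y x)) by ring.
    eapply Rle_trans; [apply Rabs_triang|]. lra.
Qed.

Lemma exists_small M eps : 0 <= M -> 0 < eps -> exists eta, 0 < eta /\ M * eta <= eps.
Proof.
  intros HM He. exists (eps / (M + 1)). split.
  - apply Rdiv_lt_0_compat; lra.
  - unfold Rdiv. apply Rle_trans with ((M + 1) * eps * / (M + 1)).
    + rewrite <- Rmult_assoc. apply Rmult_le_compat_r. left; apply Rinv_0_lt_compat; lra. nra.
    + right. field. lra.
Qed.

Lemma min3_pos a b c : 0 < a -> 0 < b -> 0 < c -> 0 < Rmin a (Rmin b c).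
Proof. intros. repeat apply Rmin_pos; auto. Qed.

Ltac min_le := repeat (first [apply Rmin_l | apply Rmin_r | eapply Rle_trans; [apply Rmin_l|] | eapply Rle_trans; [apply Rmin_r|]]).

Lemma HG_mult A f g d e x : HG A f d x -> HG A g e x ->
  HG A (fun y => f y * g y) (f x * fst e + g x * fst d, f x * snd e + g x * snd d) x.
Proof.
  intros H1 H2 eps He.
  destruct (HG_lip _ _ _ _ H1) as [l1 [Hl1 L1]]. destruct (HG_lip _ _ _ _ H2) as [l2 [Hl2 L2]].
  pose proof (nL_nonneg d); pose proof (nL_nonneg e).
  set (M1 := nL d + 1) in *. set (M2 := nL e + 1) in *.
  set (c := Rabs (f x) + Rabs (g x)).
  assert (Hc : 0 <= c) by (unfold c; pose proof (Rabs_pos (f x)); pose proof (Rabs_pos (g x)); lra).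
  destruct (exists_small c (eps/2) Hc ltac:(lra)) as [e1 [He1 Ce1]].
  destruct (exists_small (M1 * M2) (eps/2) ltac:(unfold M1, M2; nra) ltac:(lra)) as [e3 [He3 Ce3]].
  destruct (H1 e1 He1) as [d1 [Hd1 Hy1]]. destruct (H2 e1 He1) as [d2 [Hd2 Hy2]].
  exists (Rmin (Rmin d1 d2) (Rmin (Rmin l1 l2) e3)).
  split; [repeat apply Rmin_pos; auto|].
  intros y Ay Hyx Hdy.
  pose proof (Rmin_l (Rmin d1 d2) (Rmin (Rmin l1 l2) e3)) as m1.
  pose proof (Rmin_r (Rmin d1 d2) (Rmin (Rmin l1 l2) e3)) as m2.
  pose proof (Rmin_l d1 d2). pose proof (Rmin_r d1 d2).
  pose proof (Rmin_l (Rmin l1 l2) e3). pose proof (Rmin_r (Rmin l1 l2) e3).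
  pose proof (Rmin_l l1 l2). pose proof (Rmin_r l1 l2).
  specialize (Hy1 y Ay Hyx ltac:(lra)). specialize (Hy2 y Ay Hyx ltac:(lra)).
  specialize (L1 y Ay ltac:(lra)). specialize (L2 y Ay ltac:(lra)).
  set (D := dist2 y x) in *. assert (HD : 0 <= D) by apply dist2_nonneg.
  unfold inner2, sub2 in *; simpl in *.
  set (Ef := f y - f x - (fst d * (fst y - fst x) + snd d * (snd y - snd x))) in *.
  set (Eg := g y - g x - (fst e * (fst y - fst x) + snd e * (snd y - snd x))) in *.
  replace (f y * g y - f x * g x - ((f x * fst e + g x * fst d) * (fst y - fst x) + (f x * snd e + g x * snd d) * (snd y - snd x)))
    with (f x * Eg + g x * Ef + (f y - f x) * (g y - g x)) by (unfold Ef, Eg; ring).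
  eapply Rle_trans; [apply Rabs_triang|].
  eapply Rle_trans; [apply Rplus_le_compat_r; apply Rabs_triang|].
  rewrite !Rabs_mult.
  pose proof (Rabs_pos (f x)); pose proof (Rabs_pos (g x)); pose proof (Rabs_pos (f y - f x)); pose proof (Rabs_pos (g y - g x)).
  assert (Rabs (f x) * Rabs Eg + Rabs (g x) * Rabs Ef <= c * e1 * D).
  { assert (Rabs (f x) * Rabs Eg <= Rabs (f x) * (e1 * D)) by (apply Rmult_le_compat_l; lra).
    assert (Rabs (g x) * Rabs Ef <= Rabs (g x) * (e1 * D)) by (apply Rmult_le_compat_l; lra).
    unfold c. nra. }
  assert (Rabs (f y - f x) * Rabs (g y - g x) <= M1 * D * (M2 * D)).
  { apply Rmult_le_compat; auto. }
  assert (M1 * D * (M2 * D) <= M1 * M2 * e3 * D).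
  { assert (D <= e3) by lra. assert (0 <= M1 * M2) by (apply Rmult_le_pos; unfold M1, M2; lra).
    replace (M1*D*(M2*D)) with ((M1*M2*D)*D) by ring; replace (M1*M2*e3*D) with ((M1*M2*e3)*D) by ring.
    apply Rmult_le_compat_r; auto; apply Rmult_le_compat_l; auto. }
  assert (c * e1 * D <= eps / 2 * D) by (apply Rmult_le_compat_r; auto).
  assert (M1 * M2 * e3 * D <= eps / 2 * D) by (apply Rmult_le_compat_r; auto).
  lra.
Qed.

Lemma dpl_bound phi u l : derivable_pt_lim phi u l -> forall eps, 0 < eps -> exists del, 0 < del /\
  forall v, Rabs (v - u) < del -> Rabs (phi v - phi u - l * (v - u)) <= eps * Rabs (v - u).
Proof.
  intros H eps He. destruct (H eps He) as [del Hd]. exists del; split; [apply cond_pos|].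
  intros v Hv. destruct (Req_dec (v - u) 0) as [E|N].
  - replace v with u by lra. replace (phi u - phi u - l * (u - u)) with 0 by ring. rewrite Rabs_R0. unfold Rminus; rewrite Rplus_opp_r, Rabs_R0. lra.
  - specialize (Hd (v - u) N Hv). replace (u + (v - u)) with v in Hd by ring.
    replace (phi v - phi u - l * (v - u)) with (((phi v - phi u) / (v - u) - l) * (v - u)) by (field; auto).
    rewrite Rabs_mult. apply Rmult_le_compat_r; [apply Rabs_pos| lra].
Qed.

Lemma HG_comp1 A f d x phi l : derivable_pt_lim phi (f x) l -> HG A f d x ->
  HG A (fun y => phi (f y)) (l * fst d, l * snd d) x.
Proof.
  intros Hp H eps He.
  destruct (HG_lip _ _ _ _ H) as [l1 [Hl1 L1]].
  pose proof (nL_nonneg d). set (M := nL d + 1) in *.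
  destruct (exists_small M (eps/2) ltac:(unfold M; lra) ltac:(lra)) as [e1 [He1 Ce1]].
  destruct (dpl_bound _ _ _ Hp e1 He1) as [dp [Hdp Bp]].
  destruct (exists_small M dp ltac:(unfold M; lra) Hdp) as [e2 [He2 Ce2]].
  destruct (exists_small (Rabs l) (eps/2) ltac:(apply Rabs_pos) ltac:(lra)) as [e3 [He3 Ce3]].
  destruct (H e3 He3) as [d1 [Hd1 Hy1]].
  exists (Rmin (Rmin l1 (e2/2)) d1). split; [repeat apply Rmin_pos; lra|].
  intros y Ay Hyx Hdy.
  pose proof (Rmin_l (Rmin l1 (e2/2)) d1). pose proof (Rmin_r (Rmin l1 (e2/2)) d1).
  pose proof (Rmin_l l1 (e2/2)). pose proof (Rmin_r l1 (e2/2)).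
  specialize (L1 y Ay ltac:(lra)). specialize (Hy1 y Ay Hyx ltac:(lra)).
  set (D := dist2 y x) in *. assert (HD : 0 <= D) by apply dist2_nonneg.
  assert (Rabs (f y - f x) < dp).
  { apply Rle_lt_trans with (M * D); auto. assert (D < e2) by lra. unfold M in *. nra. }
  specialize (Bp (f y) H5).
  unfold inner2, sub2 in *; simpl in *.
  replace (phi (f y) - phi (f x) - (l * fst d * (fst y - fst x) + l * snd d * (snd y - snd x)))
   with ((phi (f y) - phi (f x) - l * (f y - f x)) + l * (f y - f x - (fst d * (fst y - fst x) + snd d * (snd y - snd x)))) by ring.
  eapply Rle_trans; [apply Rabs_triang|]. rewrite Rabs_mult.
  pose proof (Rabs_pos l).
  assert (e1 * Rabs (f y - f x) <= e1 * (M * D)) by (apply Rmult_le_compat_l; lra).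
  assert (Rabs l * Rabs (f y - f x - (fst d * (fst y - fst x) + snd d * (snd y - snd x))) <= Rabs l * (e3 * D)) by (apply Rmult_le_compat_l; lra).
  nra.
Qed.

Lemma HG_comp2 (A K : R2 -> Prop) (P1 P2 : R2 -> R) (f : R2 -> R) J1 J2 d p :
  HG A P1 J1 p -> HG A P2 J2 p -> (forall y, A y -> K (P1 y, P2 y)) ->
  HG K f d (P1 p, P2 p) ->
  HG A (fun y => f (P1 y, P2 y))
     (fst d * fst J1 + snd d * fst J2, fst d * snd J1 + snd d * snd J2) p.
Proof.
  intros H1 H2 HK Hf eps He.
  destruct (HG_lip _ _ _ _ H1) as [l1 [Hl1 L1]]. destruct (HG_lip _ _ _ _ H2) as [l2 [Hl2 L2]].
  pose proof (nL_nonneg J1); pose proof (nL_nonneg J2).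
  set (M := nL J1 + 1 + (nL J2 + 1)) in *.
  destruct (exists_small M (eps/2) ltac:(unfold M; lra) ltac:(lra)) as [e1 [He1 Ce1]].
  destruct (Hf e1 He1) as [df [Hdf Bf]].
  destruct (exists_small M df ltac:(unfold M; lra) Hdf) as [e2 [He2 Ce2]].
  pose proof (nL_nonneg d).
  destruct (exists_small (nL d) (eps/2) ltac:(auto) ltac:(lra)) as [e3 [He3 Ce3]].
  destruct (H1 e3 He3) as [d1 [Hd1 Hy1]]. destruct (H2 e3 He3) as [d2 [Hd2 Hy2]].
  exists (Rmin (Rmin l1 l2) (Rmin (e2/2) (Rmin d1 d2))).
  split; [repeat apply Rmin_pos; lra|].
  intros y Ay Hyx Hdy.
  pose proof (Rmin_l (Rmin l1 l2) (Rmin (e2/2) (Rmin d1 d2))). pose proof (Rmin_r (Rmin l1 l2) (Rmin (e2/2) (Rmin d1 d2))).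
  pose proof (Rmin_l l1 l2). pose proof (Rmin_r l1 l2).
  pose proof (Rmin_l (e2/2) (Rmin d1 d2)). pose proof (Rmin_r (e2/2) (Rmin d1 d2)).
  pose proof (Rmin_l d1 d2). pose proof (Rmin_r d1 d2).
  specialize (L1 y Ay ltac:(lra)). specialize (L2 y Ay ltac:(lra)).
  specialize (Hy1 y Ay Hyx ltac:(lra)). specialize (Hy2 y Ay Hyx ltac:(lra)).
  set (D := dist2 y p) in *. assert (HD : 0 <= D) by apply dist2_nonneg.
  set (q := (P1 y, P2 y)). set (q0 := (P1 p, P2 p)).
  assert (Hq : dist2 q q0 <= M * D).
  { eapply Rle_trans; [apply dist2_L1|]. unfold q, q0; simpl. unfold M. lra. }
  assert (Bq : Rabs (f q - f q0 - inner2 d (sub2 q q0)) <= e1 * (M * D)).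
  { destruct (Classical_Prop.classic (q = q0)) as [E|N].
    - rewrite E. assert (Z : f q0 - f q0 - inner2 d (sub2 q0 q0) = 0). { unfold inner2, sub2; simpl; ring. }
      rewrite Z, Rabs_R0. apply Rmult_le_pos; [lra|]. apply Rmult_le_pos; [unfold M; lra|lra].
    - eapply Rle_trans. apply Bf; auto. apply HK; auto.
      + apply Rle_lt_trans with (M * D); auto. assert (D < e2) by lra.
        assert (M * D < M * e2) by (apply Rmult_lt_compat_l; unfold M; lra). lra.
      + apply Rmult_le_compat_l; [lra| exact Hq]. }
  unfold q, q0, inner2, sub2 in *; simpl in *.
  set (E1 := P1 y - P1 p - (fst J1 * (fst y - fst p) + snd J1 * (snd y - snd p))) in *.
  set (E2 := P2 y - P2 p - (fst J2 * (fst y - fst p) + snd J2 * (snd y - snd p))) in *.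
  replace (f (P1 y, P2 y) - f (P1 p, P2 p) - ((fst d * fst J1 + snd d * fst J2) * (fst y - fst p) + (fst d * snd J1 + snd d * snd J2) * (snd y - snd p)))
    with ((f (P1 y, P2 y) - f (P1 p, P2 p) - (fst d * (P1 y - P1 p) + snd d * (P2 y - P2 p))) + (fst d * E1 + snd d * E2)) by (unfold E1, E2; ring).
  eapply Rle_trans; [apply Rabs_triang|].
  assert (Rabs (fst d * E1 + snd d * E2) <= nL d * (e3 * D)).
  { eapply Rle_trans; [apply Rabs_triang|]. rewrite !Rabs_mult. unfold nL.
    pose proof (Rabs_pos (fst d)); pose proof (Rabs_pos (snd d)). nra. }
  nra.
Qed.

Notation CW := cont_within.

Lemma CW_ext {Y} (dY : Y -> Y -> R) A g g' x : (forall y, A y -> g y = g' y) -> g x = g' x ->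
  CW dY A g x -> CW dY A g' x.
Proof.
  intros E Ex H eps He. destruct (H eps He) as [del [Hd Hy]]. exists del; split; auto.
  intros y Ay Hdy. rewrite <- (E y Ay), <- Ex. auto.
Qed.

Lemma CW_sub {Y} (dY : Y -> Y -> R) (A B : R2 -> Prop) g x : (forall y, B y -> A y) -> CW dY A g x -> CW dY B g x.
Proof. intros S H eps He. destruct (H eps He) as [del [Hd Hy]]. exists del; split; auto. Qed.

Lemma CW_union {Y} (dY : Y -> Y -> R) (A B : R2 -> Prop) g x : CW dY A g x -> CW dY B g x -> CW dY (fun y => A y \/ B y) g x.
Proof.
  intros H1 H2 eps He. destruct (H1 eps He) as [d1 [Hd1 Hy1]]. destruct (H2 eps He) as [d2 [Hd2 Hy2]].
  exists (Rmin d1 d2); split; [apply Rmin_pos; auto|].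
  intros y [Ay|Ay] Hdy.
  - apply Hy1; auto. eapply Rlt_le_trans; [exact Hdy| apply Rmin_l].
  - apply Hy2; auto. eapply Rlt_le_trans; [exact Hdy| apply Rmin_r].
Qed.

Lemma CW_far {Y} (dY : Y -> Y -> R) (A : R2 -> Prop) g x r : 0 < r -> (forall y, A y -> r <= dist2 y x) -> CW dY A g x.
Proof. intros Hr F eps He. exists r; split; auto. intros y Ay Hd. specialize (F y Ay). lra. Qed.

Lemma CW_const A c x : CW Rdist A (fun _ => c) x.
Proof. intros eps He. exists 1; split; [lra|]. intros. unfold Rdist. replace (c - c) with 0 by ring. rewrite Rabs_R0; lra. Qed.

Lemma HG_CW A f d x : HG A f d x -> CW Rdist A f x.
Proof.
  intros H eps He. destruct (HG_lip _ _ _ _ H) as [l [Hl L]].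
  pose proof (nL_nonneg d).
  destruct (exists_small (nL d + 1) (eps/2) ltac:(lra) ltac:(lra)) as [e [He' Ce]].
  exists (Rmin l e); split; [apply Rmin_pos; auto|].
  intros y Ay Hdy. pose proof (Rmin_l l e); pose proof (Rmin_r l e).
  specialize (L y Ay ltac:(lra)). unfold Rdist.
  pose proof (dist2_nonneg y x).
  assert ((nL d + 1) * dist2 y x <= (nL d + 1) * e) by (apply Rmult_le_compat_l; lra).
  lra.
Qed.

Lemma CWv_pair A g1 g2 x : CW Rdist A g1 x -> CW Rdist A g2 x -> CW dist2 A (fun y => (g1 y, g2 y)) x.
Proof.
  intros H1 H2 eps He. destruct (H1 (eps/2) ltac:(lra)) as [d1 [Hd1 Hy1]]. destruct (H2 (eps/2) ltac:(lra)) as [d2 [Hd2 Hy2]].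
  exists (Rmin d1 d2); split; [apply Rmin_pos; auto|].
  intros y Ay Hdy. pose proof (Rmin_l d1 d2); pose proof (Rmin_r d1 d2).
  specialize (Hy1 y Ay ltac:(lra)). specialize (Hy2 y Ay ltac:(lra)). unfold Rdist in *.
  eapply Rle_lt_trans; [apply dist2_L1|]. simpl. lra.
Qed.

Lemma CWv_fst A g x : CW dist2 A g x -> CW Rdist A (fun y => fst (g y)) x.
Proof.
  intros H eps He. destruct (H eps He) as [d [Hd Hy]]. exists d; split; auto.
  intros y Ay Hdy. unfold Rdist. eapply Rle_lt_trans; [apply dist2_fst| auto].
Qed.

Lemma CWv_snd A g x : CW dist2 A g x -> CW Rdist A (fun y => snd (g y)) x.
Proof.
  intros H eps He. destruct (H eps He) as [d [Hd Hy]]. exists d; split; auto.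
  intros y Ay Hdy. unfold Rdist. eapply Rle_lt_trans; [apply dist2_snd| auto].
Qed.

Lemma CW_plus A f g x : CW Rdist A f x -> CW Rdist A g x -> CW Rdist A (fun y => f y + g y) x.
Proof.
  intros H1 H2 eps He. destruct (H1 (eps/2) ltac:(lra)) as [d1 [Hd1 Hy1]]. destruct (H2 (eps/2) ltac:(lra)) as [d2 [Hd2 Hy2]].
  exists (Rmin d1 d2); split; [apply Rmin_pos; auto|].
  intros y Ay Hdy. pose proof (Rmin_l d1 d2); pose proof (Rmin_r d1 d2).
  specialize (Hy1 y Ay ltac:(lra)). specialize (Hy2 y Ay ltac:(lra)). unfold Rdist in *.
  replace (f y + g y - (f x + g x)) with ((f y - f x) + (g y - g x)) by ring.
  eapply Rle_lt_trans; [apply Rabs_triang|]. lra.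
Qed.

Lemma CW_mult A f g x : CW Rdist A f x -> CW Rdist A g x -> CW Rdist A (fun y => f y * g y) x.
Proof.
  intros H1 H2 eps He.
  set (c := Rabs (f x) + Rabs (g x) + 1).
  assert (Hc : 1 <= c) by (unfold c; pose proof (Rabs_pos (f x)); pose proof (Rabs_pos (g x)); lra).
  set (e := Rmin 1 (eps / (2 * c))).
  assert (He0 : 0 < e) by (apply Rmin_pos; [lra| apply Rdiv_lt_0_compat; lra]).
  assert (Hce : c * e <= eps / 2).
  { apply Rle_trans with (c * (eps / (2 * c))). apply Rmult_le_compat_l; [lra| apply Rmin_r].
    right. field. lra. }
  assert (He1 : e <= 1) by apply Rmin_l.
  destruct (H1 e He0) as [d1 [Hd1 Hy1]]. destruct (H2 e He0) as [d2 [Hd2 Hy2]].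
  exists (Rmin d1 d2); split; [apply Rmin_pos; auto|].
  intros y Ay Hdy. pose proof (Rmin_l d1 d2); pose proof (Rmin_r d1 d2).
  specialize (Hy1 y Ay ltac:(lra)). specialize (Hy2 y Ay ltac:(lra)). unfold Rdist in *.
  replace (f y * g y - f x * g x) with (f x * (g y - g x) + g x * (f y - f x) + (f y - f x) * (g y - g x)) by ring.
  eapply Rle_lt_trans; [apply Rabs_triang|].
  eapply Rle_lt_trans; [apply Rplus_le_compat_r; apply Rabs_triang|].
  rewrite !Rabs_mult.
  pose proof (Rabs_pos (f x)); pose proof (Rabs_pos (g x)); pose proof (Rabs_pos (f y - f x)); pose proof (Rabs_pos (g y - g x)).
  assert (Rabs (f x) * Rabs (g y - g x) <= Rabs (f x) * e) by (apply Rmult_le_compat_l; lra).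
  assert (Rabs (g x) * Rabs (f y - f x) <= Rabs (g x) * e) by (apply Rmult_le_compat_l; lra).
  assert (Rabs (f y - f x) * Rabs (g y - g x) <= e * e) by (apply Rmult_le_compat; lra).
  assert (e * e <= e) by nra.
  unfold c in Hce. lra.
Qed.

Definition pcont (phi : R -> R) (u : R) := forall eps, 0 < eps -> exists del, 0 < del /\
  forall v, Rabs (v - u) < del -> Rabs (phi v - phi u) < eps.

Lemma dpl_cont phi u l : derivable_pt_lim phi u l -> pcont phi u.
Proof.
  intros H eps He.
  destruct (dpl_bound _ _ _ H 1 ltac:(lra)) as [d [Hd B]].
  destruct (exists_small (Rabs l + 1) (eps/2) ltac:(pose proof (Rabs_pos l); lra) ltac:(lra)) as [e [He' Ce]].
  exists (Rmin d e); split; [apply Rmin_pos; auto|].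
  intros v Hv. pose proof (Rmin_l d e); pose proof (Rmin_r d e).
  specialize (B v ltac:(lra)).
  replace (phi v - phi u) with ((phi v - phi u - l * (v - u)) + l * (v - u)) by ring.
  eapply Rle_lt_trans; [apply Rabs_triang|]. rewrite Rabs_mult.
  pose proof (Rabs_pos l); pose proof (Rabs_pos (v - u)).
  assert ((Rabs l + 1) * Rabs (v - u) <= (Rabs l + 1) * e) by (apply Rmult_le_compat_l; lra).
  nra.
Qed.

Lemma CW_comp_real A g x phi : pcont phi (g x) -> CW Rdist A g x -> CW Rdist A (fun y => phi (g y)) x.
Proof.
  intros Hp H eps He. destruct (Hp eps He) as [d [Hd Hv]]. destruct (H d Hd) as [d1 [Hd1 Hy]].
  exists d1; split; auto. intros y Ay Hdy. unfold Rdist. apply Hv. apply Hy; auto.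
Qed.

Lemma CW_comp2 {Y} (dY : Y -> Y -> R) (A K : R2 -> Prop) (g : R2 -> Y) (Phi : R2 -> R2) p :
  CW dY K g (Phi p) -> (forall y, A y -> K (Phi y)) -> CW dist2 A Phi p -> CW dY A (fun y => g (Phi y)) p.
Proof.
  intros Hg HK HP eps He. destruct (Hg eps He) as [d [Hd Hy]]. destruct (HP d Hd) as [d1 [Hd1 Hy1]].
  exists d1; split; auto.
Qed.

Lemma CW_fst A x : CW Rdist A (fun y => fst y) x.
Proof. apply (HG_CW _ _ _ _ (HG_fst A x)). Qed.
Lemma CW_snd A x : CW Rdist A (fun y => snd y) x.
Proof. apply (HG_CW _ _ _ _ (HG_snd A x)). Qed.

Lemma HG_eqd A f d d' x : d = d' -> HG A f d x -> HG A f d' x.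
Proof. intros ->; auto. Qed.

Definition SB (B : R -> Prop) (q : R2) : Prop := 0 <= fst q <= 1 /\ B (snd q).

Definition Fside (t1 t2 : R -> R) (h : R2 -> R) (q : R2) : R :=
  -3 * h (t1 (fst q), snd q) + 4 * h (t2 (fst q), snd q).

Definition dGside (t1 t1' t2 t2' : R -> R) (dh : R2 -> R2) (q : R2) : R2 :=
  (-3 * (t1' (fst q) * fst (dh (t1 (fst q), snd q))) + 4 * (t2' (fst q) * fst (dh (t2 (fst q), snd q))),
   -3 * snd (dh (t1 (fst q), snd q)) + 4 * snd (dh (t2 (fst q), snd q))).

Lemma side_piece (I B : R -> Prop) (t t' : R -> R) (h : R2 -> R) (dh : R2 -> R2) p :
  derivable_pt_lim t (fst p) (t' (fst p)) -> pcont t' (fst p) ->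
  (forall x, I x -> 0 <= t x <= 1) ->
  (forall q, 0 <= fst q <= 1 -> B (snd q) -> HG (SB B) h (dh q) q /\ CW dist2 (SB B) dh q) ->
  I (fst p) -> B (snd p) ->
  HG (fun q => I (fst q) /\ B (snd q)) (fun q => h (t (fst q), snd q))
     (t' (fst p) * fst (dh (t (fst p), snd p)), snd (dh (t (fst p), snd p))) p /\
  CW dist2 (fun q => I (fst q) /\ B (snd q)) (fun q => dh (t (fst q), snd q)) p /\
  CW Rdist (fun q => I (fst q) /\ B (snd q)) (fun q => t' (fst q)) p.
Proof.
  intros Hd Hc Ht Hh HI HB.
  assert (Hq : 0 <= fst (t (fst p), snd p) <= 1 /\ B (snd (t (fst p), snd p))) by (simpl; auto).
  destruct (Hh _ (proj1 Hq) (proj2 Hq)) as [H1 H2].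
  assert (HP1 : HG (fun q => I (fst q) /\ B (snd q)) (fun q => t (fst q)) (t' (fst p) * 1, t' (fst p) * 0) p).
  { apply (HG_comp1 _ (fun q => fst q) (1, 0) p t (t' (fst p))); auto. apply HG_fst. }
  assert (HP2 := HG_snd (fun q => I (fst q) /\ B (snd q)) p).
  split; [|split].
  - eapply HG_eqd; [| apply (HG_comp2 _ (SB B) (fun q => t (fst q)) (fun q => snd q) h (t' (fst p) * 1, t' (fst p) * 0) (0,1) (dh (t (fst p), snd p)) p HP1 HP2)].
    + simpl. f_equal; ring.
    + intros y [Iy By]. unfold SB; simpl; auto.
    + exact H1.
  - apply (CW_comp2 dist2 _ (SB B) dh (fun q => (t (fst q), snd q)) p); auto.
    + intros y [Iy By]. unfold SB; simpl; auto.
    + apply CWv_pair. apply (HG_CW _ _ _ _ HP1). apply CW_snd.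
  - apply (CW_comp_real _ (fun q => fst q) p t'); auto. apply CW_fst.
Qed.

Lemma side_C1 (I B : R -> Prop) (t1 t1' t2 t2' : R -> R) (h : R2 -> R) (dh : R2 -> R2) :
  (forall x, I x -> derivable_pt_lim t1 x (t1' x)) ->
  (forall x, I x -> derivable_pt_lim t2 x (t2' x)) ->
  (forall x, I x -> pcont t1' x) -> (forall x, I x -> pcont t2' x) ->
  (forall x, I x -> 0 <= t1 x <= 1) -> (forall x, I x -> 0 <= t2 x <= 1) ->
  (forall q, 0 <= fst q <= 1 -> B (snd q) -> HG (SB B) h (dh q) q /\ CW dist2 (SB B) dh q) ->
  forall p, I (fst p) -> B (snd p) ->
   HG (fun q => I (fst q) /\ B (snd q)) (Fside t1 t2 h) (dGside t1 t1' t2 t2' dh p) p /\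
   CW dist2 (fun q => I (fst q) /\ B (snd q)) (dGside t1 t1' t2 t2' dh) p.
Proof.
  intros D1 D2 C1 C2 R1 R2 Hh p HI HB.
  destruct (side_piece I B t1 t1' h dh p (D1 _ HI) (C1 _ HI) R1 Hh HI HB) as [G1 [K1 L1]].
  destruct (side_piece I B t2 t2' h dh p (D2 _ HI) (C2 _ HI) R2 Hh HI HB) as [G2 [K2 L2]].
  split.
  - eapply HG_eqd; [| apply HG_plus; [apply (HG_scal _ _ _ _ (-3) G1) | apply (HG_scal _ _ _ _ 4 G2)]].
    unfold dGside; simpl. f_equal; ring.
  - apply CWv_pair.
    + apply CW_plus.
      * apply (CW_mult _ (fun _ => -3)); [apply CW_const|].
        apply CW_mult; auto. apply (CWv_fst _ _ _ K1).
      * apply (CW_mult _ (fun _ => 4)); [apply CW_const|].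
        apply CW_mult; auto. apply (CWv_fst _ _ _ K2).
    + apply CW_plus.
      * apply (CW_mult _ (fun _ => -3)); [apply CW_const|]. apply (CWv_snd _ _ _ K1).
      * apply (CW_mult _ (fun _ => 4)); [apply CW_const|]. apply (CWv_snd _ _ _ K2).
Qed.

Lemma dpl_ext f g x l : (forall u, f u = g u) -> derivable_pt_lim f x l -> derivable_pt_lim g x l.
Proof.
  intros E H eps He. destruct (H eps He) as [d Hd]. exists d. intros h Hh Hhd.
  rewrite <- !E. auto.
Qed.

Lemma dpl_eql f x l l' : l = l' -> derivable_pt_lim f x l -> derivable_pt_lim f x l'.
Proof. intros ->; auto. Qed.

Definition sig1 (t : R) := t / (t - 1).
Definition sig2 (t : R) := t / (2 * (t - 1)).
Definition sig1' (t : R) := -1 / ((t - 1) * (t - 1)).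
Definition sig2' (t : R) := -1 / (2 * ((t - 1) * (t - 1))).

Lemma dpl_lin a b x : derivable_pt_lim (fun t => a * t + b) x a.
Proof.
  apply (dpl_ext (fct_cte a * id + fct_cte b)%F). { intros u. unfold fct_cte, id; simpl. reflexivity. }
  apply (dpl_eql _ _ (0 * id x + fct_cte a x * 1 + 0)). { unfold fct_cte, id. ring. }
  apply derivable_pt_lim_plus; [|apply derivable_pt_lim_const].
  apply derivable_pt_lim_mult; [apply derivable_pt_lim_const| apply derivable_pt_lim_id].
Qed.

Lemma dpl_ratio x l1 l2 (f1 f2 : R -> R) :
  derivable_pt_lim f1 x l1 -> derivable_pt_lim f2 x l2 -> f2 x <> 0 ->
  derivable_pt_lim (fun t => f1 t / f2 t) x ((l1 * f2 x - l2 * f1 x) / (f2 x * f2 x)).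
Proof.
  intros H1 H2 N. apply (dpl_ext (f1 / f2)%F). { intros u. reflexivity. }
  apply derivable_pt_lim_div; auto.
Qed.

Lemma dpl_sig1 x : x < 1 -> derivable_pt_lim sig1 x (sig1' x).
Proof.
  intros Hx.
  apply (dpl_ext (fun t => (1 * t + 0) / (1 * t + -1))). { intros u. unfold sig1. f_equal; ring. }
  eapply dpl_eql; [| apply (dpl_ratio x 1 1); try apply dpl_lin].
  - unfold sig1'. field. lra.
  - lra.
Qed.

Lemma dpl_sig2 x : x < 1 -> derivable_pt_lim sig2 x (sig2' x).
Proof.
  intros Hx.
  apply (dpl_ext (fun t => (1 * t + 0) / (2 * t + -2))). { intros u. unfold sig2. f_equal; ring. }
  eapply dpl_eql; [| apply (dpl_ratio x 1 2); try apply dpl_lin].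
  - unfold sig2'. field. lra.
  - lra.
Qed.

Lemma pcont_sig1' x : x < 1 -> pcont sig1' x.
Proof.
  intros Hx. eapply dpl_cont.
  apply (dpl_ext (fun t => (0 * t + -1) / ((1 * t + -1) * (1 * t + -1)))). { intros u. unfold sig1'. f_equal; ring. }
  apply dpl_ratio. apply dpl_lin.
  apply (dpl_ext (mult_fct (fun t => 1 * t + -1) (fun t => 1 * t + -1))). { intros u; reflexivity. }
  apply derivable_pt_lim_mult; apply dpl_lin.
  assert (x - 1 <> 0) by lra. replace (1 * x + -1) with (x - 1) by ring. apply Rmult_integral_contrapositive; auto.
Qed.

Lemma pcont_sig2' x : x < 1 -> pcont sig2' x.
Proof.
  intros Hx. eapply dpl_cont.
  apply (dpl_ext (fun t => (0 * t + -1) / ((2 * t + -2) * (1 * t + -1)))). { intros u. unfold sig2'. f_equal; ring. }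
  apply dpl_ratio. apply dpl_lin.
  apply (dpl_ext (mult_fct (fun t => 2 * t + -2) (fun t => 1 * t + -1))). { intros u; reflexivity. }
  apply derivable_pt_lim_mult; apply dpl_lin.
  assert (x - 1 <> 0) by lra. replace (1 * x + -1) with (x - 1) by ring. replace (2 * x + -2) with (2 * (x - 1)) by ring.
  apply Rmult_integral_contrapositive; split; lra.
Qed.

Lemma sig1_range x : x <= 0 -> 0 <= sig1 x <= 1.
Proof.
  intros Hx. unfold sig1. assert (E : x / (x - 1) * (x - 1) = x) by (field; lra).
  set (s := x / (x - 1)) in *. split; nra.
Qed.

Lemma sig2_range x : x <= 0 -> 0 <= sig2 x <= 1.
Proof.
  intros Hx. unfold sig2. assert (E : x / (2 * (x - 1)) * (2 * (x - 1)) = x) by (field; lra).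
  set (s := x / (2 * (x - 1))) in *. split; nra.
Qed.

Lemma sig1_0 : sig1 0 = 0.
Proof. unfold sig1. field. Qed.
Lemma sig2_0 : sig2 0 = 0.
Proof. unfold sig2. field. Qed.
Lemma sig1'_0 : sig1' 0 = -1.
Proof. unfold sig1'. field. Qed.
Lemma sig2'_0 : sig2' 0 = -1/2.
Proof. unfold sig2'. field. Qed.

Definition tR1 (x : R) := 1 - sig1 (1 - x).
Definition tR2 (x : R) := 1 - sig2 (1 - x).
Definition tR1' (x : R) := sig1' (1 - x).
Definition tR2' (x : R) := sig2' (1 - x).

Lemma dpl_tR (s s' : R -> R) x : derivable_pt_lim s (1 - x) (s' (1 - x)) ->
  derivable_pt_lim (fun u => 1 - s (1 - u)) x (s' (1 - x)).
Proof.
  intros H.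
  apply (dpl_ext (minus_fct (fct_cte 1) (comp s (fun u => -1 * u + 1)))). { intros u. unfold minus_fct, fct_cte, comp. replace (-1 * u + 1) with (1 - u) by ring. reflexivity. }
  apply (dpl_eql _ _ (0 - s' (-1 * x + 1) * -1)). { replace (-1 * x + 1) with (1 - x) by ring. ring. }
  apply derivable_pt_lim_minus. apply derivable_pt_lim_const.
  apply derivable_pt_lim_comp. apply dpl_lin. replace (-1 * x + 1) with (1 - x) by ring. auto.
Qed.

Lemma pcont_shift (s : R -> R) x : pcont s (1 - x) -> pcont (fun u => s (1 - u)) x.
Proof.
  intros H eps He. destruct (H eps He) as [d [Hd Hv]]. exists d; split; auto.
  intros v Hv'. apply Hv. replace (1 - v - (1 - x)) with (- (v - x)) by ring. rewrite Rabs_Ropp. auto.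
Qed.

Definition Tx (h : R2 -> R) (q : R2) : R :=
  if Rlt_dec (fst q) 0 then Fside sig1 sig2 h q
  else if Rle_dec (fst q) 1 then h q else Fside tR1 tR2 h q.

Definition dTx (dh : R2 -> R2) (q : R2) : R2 :=
  if Rlt_dec (fst q) 0 then dGside sig1 sig1' sig2 sig2' dh q
  else if Rle_dec (fst q) 1 then dh q else dGside tR1 tR1' tR2 tR2' dh q.

Lemma tR1_1 : tR1 1 = 1.
Proof. unfold tR1. replace (1 - 1) with 0 by ring. rewrite sig1_0. ring. Qed.
Lemma tR2_1 : tR2 1 = 1.
Proof. unfold tR2. replace (1 - 1) with 0 by ring. rewrite sig2_0. ring. Qed.
Lemma tR1'_1 : tR1' 1 = -1.
Proof. unfold tR1'. replace (1 - 1) with 0 by ring. apply sig1'_0. Qed.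
Lemma tR2'_1 : tR2' 1 = -1/2.
Proof. unfold tR2'. replace (1 - 1) with 0 by ring. apply sig2'_0. Qed.

Lemma pair_eta (v : R2) : v = (fst v, snd v).
Proof. destruct v; reflexivity. Qed.

Lemma pair_eq a b (v : R2) : a = fst v -> b = snd v -> (a, b) = v.
Proof. intros -> ->. destruct v; reflexivity. Qed.

Lemma TxL h q : fst q <= 0 -> Tx h q = Fside sig1 sig2 h q.
Proof.
  intros H. unfold Tx. destruct (Rlt_dec (fst q) 0); auto.
  assert (E : fst q = 0) by lra. destruct (Rle_dec (fst q) 1); [|lra].
  unfold Fside. rewrite E, sig1_0, sig2_0. rewrite <- E, <- pair_eta. ring.
Qed.

Lemma dTxL dh q : fst q <= 0 -> dTx dh q = dGside sig1 sig1' sig2 sig2' dh q.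
Proof.
  intros H. unfold dTx. destruct (Rlt_dec (fst q) 0); auto.
  assert (E : fst q = 0) by lra. destruct (Rle_dec (fst q) 1); [|lra].
  unfold dGside. rewrite E, sig1_0, sig2_0, sig1'_0, sig2'_0. rewrite <- E, <- pair_eta.
  symmetry; apply pair_eq; field.
Qed.

Lemma TxM h q : 0 <= fst q <= 1 -> Tx h q = h q.
Proof.
  intros H. unfold Tx. destruct (Rlt_dec (fst q) 0); [|destruct (Rle_dec (fst q) 1); auto; lra].
  assert (E : fst q = 0) by lra.
  unfold Fside. rewrite E, sig1_0, sig2_0. rewrite <- E, <- pair_eta. ring.
Qed.

Lemma dTxM dh q : 0 <= fst q <= 1 -> dTx dh q = dh q.
Proof.
  intros H. unfold dTx. destruct (Rlt_dec (fst q) 0); [|destruct (Rle_dec (fst q) 1); auto; lra].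
  assert (E : fst q = 0) by lra.
  unfold dGside. rewrite E, sig1_0, sig2_0, sig1'_0, sig2'_0. rewrite <- E, <- pair_eta.
  apply pair_eq; field.
Qed.

Lemma TxR h q : 1 <= fst q -> Tx h q = Fside tR1 tR2 h q.
Proof.
  intros H. unfold Tx. destruct (Rlt_dec (fst q) 0); [lra|].
  destruct (Rle_dec (fst q) 1); auto.
  assert (E : fst q = 1) by lra.
  unfold Fside. rewrite E, tR1_1, tR2_1. rewrite <- E, <- pair_eta. ring.
Qed.

Lemma dTxR dh q : 1 <= fst q -> dTx dh q = dGside tR1 tR1' tR2 tR2' dh q.
Proof.
  intros H. unfold dTx. destruct (Rlt_dec (fst q) 0); [lra|].
  destruct (Rle_dec (fst q) 1); auto.
  assert (E : fst q = 1) by lra.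
  unfold dGside. rewrite E, tR1_1, tR2_1, tR1'_1, tR2'_1. rewrite <- E, <- pair_eta.
  symmetry; apply pair_eq; field.
Qed.

Lemma fst_gap1 y p : fst y - fst p <= dist2 y p.
Proof. eapply Rle_trans; [apply Rle_abs| apply dist2_fst]. Qed.
Lemma fst_gap2 y p : fst p - fst y <= dist2 y p.
Proof. eapply Rle_trans; [|apply dist2_fst]. rewrite <- Rabs_Ropp. replace (- (fst y - fst p)) with (fst p - fst y) by ring. apply Rle_abs. Qed.
Lemma snd_gap1 y p : snd y - snd p <= dist2 y p.
Proof. eapply Rle_trans; [apply Rle_abs| apply dist2_snd]. Qed.
Lemma snd_gap2 y p : snd p - snd y <= dist2 y p.
Proof. eapply Rle_trans; [|apply dist2_snd]. rewrite <- Rabs_Ropp. replace (- (snd y - snd p)) with (snd p - snd y) by ring. apply Rle_abs. Qed.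

Section TxSec.
Variable B : R -> Prop.
Variable h : R2 -> R.
Variable dh : R2 -> R2.
Hypothesis Hh : forall q, 0 <= fst q <= 1 -> B (snd q) -> HG (SB B) h (dh q) q /\ CW dist2 (SB B) dh q.

Let L := fun q : R2 => fst q <= 0 /\ B (snd q).
Let Rr := fun q : R2 => 1 <= fst q /\ B (snd q).

Lemma sideL p : fst p <= 0 -> B (snd p) ->
  HG L (Fside sig1 sig2 h) (dGside sig1 sig1' sig2 sig2' dh p) p /\
  CW dist2 L (dGside sig1 sig1' sig2 sig2' dh) p.
Proof.
  intros H1 H2. apply (side_C1 (fun x => x <= 0) B); auto.
  - intros x Hx; apply dpl_sig1; lra.
  - intros x Hx; apply dpl_sig2; lra.
  - intros x Hx; apply pcont_sig1'; lra.
  - intros x Hx; apply pcont_sig2'; lra.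
  - apply sig1_range.
  - apply sig2_range.
Qed.

Lemma sideR p : 1 <= fst p -> B (snd p) ->
  HG Rr (Fside tR1 tR2 h) (dGside tR1 tR1' tR2 tR2' dh p) p /\
  CW dist2 Rr (dGside tR1 tR1' tR2 tR2' dh) p.
Proof.
  intros H1 H2. apply (side_C1 (fun x => 1 <= x) B); auto.
  - intros x Hx; unfold tR1, tR1'; apply (dpl_tR sig1 sig1'); apply dpl_sig1; lra.
  - intros x Hx; unfold tR2, tR2'; apply (dpl_tR sig2 sig2'); apply dpl_sig2; lra.
  - intros x Hx; unfold tR1'; apply (pcont_shift sig1'); apply pcont_sig1'; lra.
  - intros x Hx; unfold tR2'; apply (pcont_shift sig2'); apply pcont_sig2'; lra.
  - intros x Hx; unfold tR1. pose proof (sig1_range (1 - x) ltac:(lra)). lra.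
  - intros x Hx; unfold tR2. pose proof (sig2_range (1 - x) ltac:(lra)). lra.
Qed.

Lemma Tx_C1 : forall p, B (snd p) ->
  HG (fun q => B (snd q)) (Tx h) (dTx dh p) p /\ CW dist2 (fun q => B (snd q)) (dTx dh) p.
Proof.
  intros p Hp.
  assert (Cov : forall q, B (snd q) -> L q \/ (SB B q \/ Rr q)).
  { intros q Hq. unfold L, Rr, SB. destruct (Rle_dec (fst q) 0); [left; auto|].
    right. destruct (Rle_dec (fst q) 1); [left; split; auto; lra| right; split; auto; lra]. }
  assert (HL : HG L (Tx h) (dTx dh p) p /\ CW dist2 L (dTx dh) p).
  { destruct (Rle_dec (fst p) 0) as [a|a].
    - destruct (sideL p a Hp) as [G C]. rewrite (dTxL dh p a). split.
      + apply (HG_ext _ (Fside sig1 sig2 h)); auto.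
        * intros y [Hy _]. symmetry; apply TxL; auto.
        * symmetry; apply TxL; auto.
      + apply (CW_ext _ _ (dGside sig1 sig1' sig2 sig2' dh)); auto.
        * intros y [Hy _]. symmetry; apply dTxL; auto.
        * symmetry; apply dTxL; auto.
    - split; [apply (HG_far _ _ _ _ (fst p))| apply (CW_far _ _ _ _ (fst p))]; try lra;
        intros y [Hy _]; pose proof (fst_gap2 y p); lra. }
  assert (HR : HG Rr (Tx h) (dTx dh p) p /\ CW dist2 Rr (dTx dh) p).
  { destruct (Rle_dec 1 (fst p)) as [a|a].
    - destruct (sideR p a Hp) as [G C]. rewrite (dTxR dh p a). split.
      + apply (HG_ext _ (Fside tR1 tR2 h)); auto.
        * intros y [Hy _]. symmetry; apply TxR; auto.
        * symmetry; apply TxR; auto.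
      + apply (CW_ext _ _ (dGside tR1 tR1' tR2 tR2' dh)); auto.
        * intros y [Hy _]. symmetry; apply dTxR; auto.
        * symmetry; apply dTxR; auto.
    - split; [apply (HG_far _ _ _ _ (1 - fst p))| apply (CW_far _ _ _ _ (1 - fst p))]; try lra;
        intros y [Hy _]; pose proof (fst_gap1 y p); lra. }
  assert (HM : HG (SB B) (Tx h) (dTx dh p) p /\ CW dist2 (SB B) (dTx dh) p).
  { destruct (Rle_dec 0 (fst p)) as [a|a]; [destruct (Rle_dec (fst p) 1) as [b|b]|].
    - destruct (Hh p (conj a b) Hp) as [G C]. rewrite (dTxM dh p (conj a b)). split.
      + apply (HG_ext _ h); auto.
        * intros y [Hy _]. symmetry; apply TxM; auto.
        * symmetry; apply TxM; auto.
      + apply (CW_ext _ _ dh); auto.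
        * intros y [Hy _]. symmetry; apply dTxM; auto.
        * symmetry; apply dTxM; auto.
    - split; [apply (HG_far _ _ _ _ (fst p - 1))| apply (CW_far _ _ _ _ (fst p - 1))]; try lra;
        intros y [Hy _]; pose proof (fst_gap2 y p); lra.
    - split; [apply (HG_far _ _ _ _ (- fst p))| apply (CW_far _ _ _ _ (- fst p))]; try lra;
        intros y [Hy _]; pose proof (fst_gap1 y p); lra. }
  destruct HL as [HL1 HL2], HR as [HR1 HR2], HM as [HM1 HM2]. split.
  - apply (HG_sub (fun q => L q \/ (SB B q \/ Rr q))); auto.
    apply HG_union; auto. apply HG_union; auto.
  - apply (CW_sub _ (fun q => L q \/ (SB B q \/ Rr q))); auto.
    apply CW_union; auto. apply CW_union; auto.
Qed.

End TxSec.

Definition sw (q : R2) : R2 := (snd q, fst q).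

Lemma swap_C1 (A : R2 -> Prop) u du p :
  A (sw p) -> HG A u (du (sw p)) (sw p) -> CW dist2 A du (sw p) ->
  HG (fun q => A (sw q)) (fun q => u (sw q)) (sw (du (sw p))) p /\
  CW dist2 (fun q => A (sw q)) (fun q => sw (du (sw q))) p.
Proof.
  intros Ap H C. split.
  - eapply HG_eqd; [| apply (HG_comp2 (fun q => A (sw q)) A (fun q => snd q) (fun q => fst q) u (0,1) (1,0) (du (sw p)) p)].
    + unfold sw; simpl. f_equal; ring.
    + apply HG_snd.
    + apply HG_fst.
    + intros y Hy. exact Hy.
    + exact H.
  - apply CWv_pair.
    + apply (CWv_snd _ (fun q => du (sw q))). apply (CW_comp2 dist2 _ A du sw p); auto.
      unfold sw. apply CWv_pair; [apply CW_snd| apply CW_fst].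
    + apply (CWv_fst _ (fun q => du (sw q))). apply (CW_comp2 dist2 _ A du sw p); auto.
      unfold sw. apply CWv_pair; [apply CW_snd| apply CW_fst].
Qed.

Definition Q1 (q : R2) : Prop := 0 <= fst q <= 1 /\ 0 <= snd q <= 1.

Definition sqE (f : R2 -> R) (q : R2) : R := Tx (fun r => Tx f (sw r)) (sw q).
Definition dsqE (df : R2 -> R2) (q : R2) : R2 := sw (dTx (fun r => sw (dTx df (sw r))) (sw q)).

Lemma sq_ext f df : (forall p, Q1 p -> HG Q1 f (df p) p /\ CW dist2 Q1 df p) ->
  (forall p, HG (fun _ => True) (sqE f) (dsqE df p) p /\ CW dist2 (fun _ => True) (dsqE df) p) /\
  (forall p, Q1 p -> sqE f p = f p /\ dsqE df p = df p).
Proof.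
  intros Hf.
  set (B := fun y : R => 0 <= y <= 1).
  assert (S1 : forall p, B (snd p) -> HG (fun q => B (snd q)) (Tx f) (dTx df p) p /\ CW dist2 (fun q => B (snd q)) (dTx df) p).
  { apply Tx_C1. intros q H1 H2. apply Hf. split; auto. }
  assert (S2 : forall p, 0 <= fst p <= 1 -> HG (fun q => B (snd (sw q))) (fun q => Tx f (sw q)) (sw (dTx df (sw p))) p /\
            CW dist2 (fun q => B (snd (sw q))) (fun q => sw (dTx df (sw q))) p).
  { intros p Hp. destruct (S1 (sw p) Hp) as [G C]. apply (swap_C1 (fun q => B (snd q)) (Tx f) (dTx df) p); auto. }
  assert (S3 : forall p, HG (fun _ => True) (Tx (fun r => Tx f (sw r))) (dTx (fun r => sw (dTx df (sw r))) p) p /\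
     CW dist2 (fun _ => True) (dTx (fun r => sw (dTx df (sw r)))) p).
  { intros p. destruct (Tx_C1 (fun _ => True) (fun r => Tx f (sw r)) (fun r => sw (dTx df (sw r)))) with (p := p) as [G C]; auto.
    intros q Hq _. destruct (S2 q Hq) as [G C]. split.
    - apply (HG_sub _ _ _ _ _ (fun y H => H)) in G. unfold SB. eapply HG_sub; [|exact G]. intros y [Hy _]. exact Hy.
    - eapply CW_sub; [|exact C]. intros y [Hy _]. exact Hy. }
  split.
  - intros p. destruct (S3 (sw p)) as [G C]. unfold sqE, dsqE.
    apply (swap_C1 (fun _ => True) _ _ p); auto.
  - intros p [Hx Hy]. unfold sqE, dsqE. split.
    + rewrite TxM; [|unfold sw; simpl; auto]. unfold sw at 1; simpl. rewrite TxM; [|unfold sw; simpl; auto].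
      unfold sw; simpl. rewrite <- pair_eta. reflexivity.
    + rewrite dTxM; [|unfold sw; simpl; auto]. rewrite dTxM; [|unfold sw; simpl; auto].
      unfold sw; simpl. rewrite <- !pair_eta. reflexivity.
Qed.

Definition ngt (q : R2) : R2 := (- fst q, - snd q).

Lemma neg_C1 (A : R2 -> Prop) u du p :
  A (ngt p) -> HG A u (du (ngt p)) (ngt p) -> CW dist2 A du (ngt p) ->
  HG (fun q => A (ngt q)) (fun q => u (ngt q)) (ngt (du (ngt p))) p /\
  CW dist2 (fun q => A (ngt q)) (fun q => ngt (du (ngt q))) p.
Proof.
  intros Ap H C.
  assert (H1 := HG_scal (fun q => A (ngt q)) (fun q => fst q) (1,0) p (-1) (HG_fst _ p)).
  assert (H2 := HG_scal (fun q => A (ngt q)) (fun q => snd q) (0,1) p (-1) (HG_snd _ p)).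
  assert (CN : CW dist2 (fun q => A (ngt q)) ngt p).
  { unfold ngt. apply CWv_pair.
    - apply (CW_ext _ _ (fun q => -1 * fst q)); [intros; ring| ring|]. apply (HG_CW _ _ _ _ H1).
    - apply (CW_ext _ _ (fun q => -1 * snd q)); [intros; ring| ring|]. apply (HG_CW _ _ _ _ H2). }
  split.
  - assert (G : HG (fun q => A (ngt q)) (fun q => u (-1 * fst q, -1 * snd q))
       (fst (du (ngt p)) * (-1 * fst (1,0)) + snd (du (ngt p)) * (-1 * fst (0, 1)),
        fst (du (ngt p)) * (-1 * snd (1,0)) + snd (du (ngt p)) * (-1 * snd (0, 1))) p).
    { apply (HG_comp2 (fun q => A (ngt q)) A (fun q => -1 * fst q) (fun q => -1 * snd q) u _ _ (du (ngt p)) p H1 H2).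
      + intros y Hy. unfold ngt in Hy. replace (-1 * fst y) with (- fst y) by ring. replace (-1 * snd y) with (- snd y) by ring. exact Hy.
      + unfold ngt in H. replace (-1 * fst p) with (- fst p) by ring. replace (-1 * snd p) with (- snd p) by ring. exact H. }
    eapply HG_eqd; [| apply (HG_ext _ (fun q => u (-1 * fst q, -1 * snd q))); [ | | exact G]].
    + unfold ngt; simpl. f_equal; ring.
    + intros y _. unfold ngt. f_equal. f_equal; ring.
    + unfold ngt. f_equal. f_equal; ring.
  - assert (CC : CW dist2 (fun q => A (ngt q)) (fun q => du (ngt q)) p) by (apply (CW_comp2 dist2 _ A du ngt p); auto).
    unfold ngt at 2. apply CWv_pair.
    + apply (CW_ext _ _ (fun q => -1 * fst (du (ngt q)))); [intros; ring| ring|].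
      apply (CW_mult _ (fun _ => -1)); [apply CW_const| apply (CWv_fst _ _ _ CC)].
    + apply (CW_ext _ _ (fun q => -1 * snd (du (ngt q)))); [intros; ring| ring|].
      apply (CW_mult _ (fun _ => -1)); [apply CW_const| apply (CWv_snd _ _ _ CC)].
Qed.

Definition Am (t : R) : R := if Rlt_dec t 0 then t * t else 0.
Definition Am' (t : R) : R := if Rlt_dec t 0 then 2 * t else 0.

Lemma Am_bound t h : Rabs (Am (t + h) - Am t - Am' t * h) <= h * h.
Proof.
  unfold Am, Am'. destruct (Rlt_dec (t + h) 0); destruct (Rlt_dec t 0).
  - replace ((t + h) * (t + h) - t * t - 2 * t * h) with (h * h) by ring. rewrite Rabs_right; nra.
  - replace ((t + h) * (t + h) - 0 - 0 * h) with ((t + h) * (t + h)) by ring. rewrite Rabs_right; nra.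
  - replace (0 - t * t - 2 * t * h) with (- (t * (t + 2 * h))) by ring. rewrite Rabs_Ropp.
    rewrite Rabs_left1; nra.
  - replace (0 - 0 - 0 * h) with 0 by ring. rewrite Rabs_R0. nra.
Qed.

Lemma dpl_Am t : derivable_pt_lim Am t (Am' t).
Proof.
  intros eps He. exists (mkposreal eps He). intros h Hh Hhd. simpl in Hhd.
  replace ((Am (t + h) - Am t) / h - Am' t) with ((Am (t + h) - Am t - Am' t * h) / h) by (field; auto).
  unfold Rdiv. rewrite Rabs_mult, Rabs_inv.
  pose proof (Am_bound t h). pose proof (Rabs_pos h).
  assert (0 < Rabs h) by (apply Rabs_pos_lt; auto).
  apply Rle_lt_trans with (h * h * / Rabs h).
  - apply Rmult_le_compat_r; auto. left; apply Rinv_0_lt_compat; auto.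
  - replace (h * h) with (Rabs h * Rabs h) by (rewrite <- Rabs_mult; apply Rabs_right; nra).
    replace (Rabs h * Rabs h * / Rabs h) with (Rabs h) by (field; lra). auto.
Qed.

Lemma Am'_lip t u : Rabs (Am' u - Am' t) <= 2 * Rabs (u - t).
Proof.
  unfold Am'. destruct (Rlt_dec u 0); destruct (Rlt_dec t 0).
  - replace (2 * u - 2 * t) with (2 * (u - t)) by ring. rewrite Rabs_mult. rewrite (Rabs_right 2); lra.
  - replace (2 * u - 0) with (2 * u) by ring. rewrite Rabs_mult, (Rabs_right 2) by lra.
    apply Rmult_le_compat_l; [lra|]. rewrite (Rabs_left u), (Rabs_left1 (u - t)); lra.
  - replace (0 - 2 * t) with (2 * (- t)) by ring. rewrite Rabs_mult, (Rabs_right 2) by lra.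
    apply Rmult_le_compat_l; [lra|]. rewrite (Rabs_right (- t)), (Rabs_right (u - t)); lra.
  - replace (0 - 0) with 0 by ring. rewrite Rabs_R0. pose proof (Rabs_pos (u - t)). lra.
Qed.

Lemma pcont_Am' t : pcont Am' t.
Proof.
  intros eps He. exists (eps / 2). split; [lra|]. intros v Hv.
  pose proof (Am'_lip t v). lra.
Qed.

Lemma Am_range t : 0 <= Am t <= t * t.
Proof. unfold Am. destruct (Rlt_dec t 0); nra. Qed.

Lemma Am'_bound t : Rabs (Am' t) <= 2 * Rabs t.
Proof.
  unfold Am'. destruct (Rlt_dec t 0).
  - rewrite Rabs_mult, (Rabs_right 2); lra.
  - rewrite Rabs_R0. pose proof (Rabs_pos t). lra.
Qed.

Definition sq2 (q : R2) := fst q * fst q + snd q * snd q.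
Definition chi (q : R2) := (Am (fst q) + Am (snd q)) * / sq2 q.
Definition dchi (q : R2) : R2 :=
  ((Am (fst q) + Am (snd q)) * (-1 / (sq2 q * sq2 q) * (2 * fst q)) + / sq2 q * Am' (fst q),
   (Am (fst q) + Am (snd q)) * (-1 / (sq2 q * sq2 q) * (2 * snd q)) + / sq2 q * Am' (snd q)).

Definition O2 : R2 := (0, 0).

Lemma sq2_pos q : q <> O2 -> 0 < sq2 q.
Proof.
  intros H. destruct q as [x y]. unfold sq2; simpl.
  destruct (Req_dec x 0); destruct (Req_dec y 0); subst; try nra.
  exfalso; apply H; reflexivity.
Qed.

Lemma chi_range q : 0 <= chi q <= 1.
Proof.
  unfold chi. destruct (Req_dec (sq2 q) 0) as [E|N].
  - rewrite E, Rinv_0. lra.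
  - pose proof (Am_range (fst q)); pose proof (Am_range (snd q)).
    assert (0 < sq2 q) by (unfold sq2 in *; nra).
    assert (0 < / sq2 q) by (apply Rinv_0_lt_compat; auto).
    assert (sq2 q * / sq2 q = 1) by (field; lra).
    unfold sq2 in *. split; nra.
Qed.

Lemma chi_Q1 q : Q1 q -> chi q = 0.
Proof.
  intros [[H1 _] [H2 _]]. unfold chi, Am.
  destruct (Rlt_dec (fst q) 0); [lra|]. destruct (Rlt_dec (snd q) 0); [lra|]. ring.
Qed.

Definition Q3 (q : R2) : Prop := -1 <= fst q <= 0 /\ -1 <= snd q <= 0.

Lemma Am_neg t : t <= 0 -> Am t = t * t.
Proof. intros. unfold Am. destruct (Rlt_dec t 0); auto. assert (t = 0) by lra. subst; ring. Qed.

Lemma chi_Q3 q : Q3 q -> q <> O2 -> chi q = 1.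
Proof.
  intros [[_ H1] [_ H2]] N. pose proof (sq2_pos q N). unfold chi. rewrite !Am_neg by auto.
  unfold sq2 in *. field. lra.
Qed.

Lemma dpl_inv s : 0 < s -> derivable_pt_lim Rinv s (-1 / (s * s)).
Proof.
  intros Hs.
  apply (dpl_ext (fun t => (0 * t + 1) / (1 * t + 0))). { intros u. unfold Rdiv. replace (0*u+1) with 1 by ring. replace (1*u+0) with u by ring. ring. }
  eapply dpl_eql; [| apply (dpl_ratio s 0 1); try apply dpl_lin].
  - cbv beta. field. lra.
  - lra.
Qed.

Lemma chi_HG q : q <> O2 -> HG (fun _ => True) chi (dchi q) q.
Proof.
  intros N. pose proof (sq2_pos q N) as Hs.
  assert (HN : HG (fun _ => True) (fun y => Am (fst y) + Am (snd y)) (Am' (fst q), Am' (snd q)) q).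
  { eapply HG_eqd; [| apply (HG_plus _ (fun y => Am (fst y)) (fun y => Am (snd y)) (Am' (fst q) * 1, Am' (fst q) * 0) (Am' (snd q) * 0, Am' (snd q) * 1))].
    - simpl. f_equal; ring.
    - apply (HG_comp1 _ (fun y => fst y) (1, 0) q Am). apply dpl_Am. apply HG_fst.
    - apply (HG_comp1 _ (fun y => snd y) (0, 1) q Am). apply dpl_Am. apply HG_snd. }
  assert (HS : HG (fun _ => True) sq2 (2 * fst q, 2 * snd q) q).
  { change (HG (fun _ => True) (fun y => fst y * fst y + snd y * snd y) (2 * fst q, 2 * snd q) q).
    eapply HG_eqd; [| apply HG_plus; [apply (HG_mult _ (fun y => fst y) (fun y => fst y)); apply HG_fst
                                      | apply (HG_mult _ (fun y => snd y) (fun y => snd y)); apply HG_snd]].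
    simpl. f_equal; ring. }
  assert (HI := HG_comp1 _ _ _ _ Rinv _ (dpl_inv _ Hs) HS).
  assert (HM := HG_mult _ _ _ _ _ _ HN HI). simpl in HM.
  eapply HG_eqd; [| exact HM]. unfold dchi. f_equal; field; lra.
Qed.

Lemma chi_CW q : q <> O2 -> CW dist2 (fun _ => True) dchi q.
Proof.
  intros N. pose proof (sq2_pos q N) as Hs.
  assert (HS : HG (fun _ => True) sq2 (2 * fst q, 2 * snd q) q).
  { change (HG (fun _ => True) (fun y => fst y * fst y + snd y * snd y) (2 * fst q, 2 * snd q) q).
    eapply HG_eqd; [| apply HG_plus; [apply (HG_mult _ (fun y => fst y) (fun y => fst y)); apply HG_fst
                                      | apply (HG_mult _ (fun y => snd y) (fun y => snd y)); apply HG_snd]].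
    simpl. f_equal; ring. }
  assert (CI : CW Rdist (fun _ => True) (fun y => / sq2 y) q).
  { apply (HG_CW _ _ _ _ (HG_comp1 _ _ _ _ Rinv _ (dpl_inv _ Hs) HS)). }
  assert (CS := HG_CW _ _ _ _ HS).
  assert (CN : CW Rdist (fun _ => True) (fun y => Am (fst y) + Am (snd y)) q).
  { apply CW_plus; apply CW_comp_real; try (apply (dpl_cont _ _ _ (dpl_Am _))); [apply CW_fst| apply CW_snd]. }
  assert (CI2 : CW Rdist (fun _ => True) (fun y => -1 / (sq2 y * sq2 y)) q).
  { apply (CW_ext _ _ (fun y => -1 * (/ sq2 y * / sq2 y))).
    - intros y _. unfold Rdiv. rewrite Rinv_mult. ring.
    - unfold Rdiv. rewrite Rinv_mult. ring.
    - apply (CW_mult _ (fun _ => -1)); [apply CW_const|]. apply CW_mult; auto. }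
  unfold dchi. apply CWv_pair.
  - apply CW_plus.
    + apply CW_mult; auto. apply CW_mult; auto. apply (CW_mult _ (fun _ => 2)); [apply CW_const| apply CW_fst].
    + apply CW_mult; auto. apply CW_comp_real; [apply pcont_Am'| apply CW_fst].
  - apply CW_plus.
    + apply CW_mult; auto. apply CW_mult; auto. apply (CW_mult _ (fun _ => 2)); [apply CW_const| apply CW_snd].
    + apply CW_mult; auto. apply CW_comp_real; [apply pcont_Am'| apply CW_snd].
Qed.

Lemma sq_le_abs x r : Rabs x <= r -> x * x <= r * r.
Proof.
  intros H. assert (E : x * x = Rabs x * Rabs x) by (rewrite <- Rabs_mult; symmetry; apply Rabs_right; nra).
  rewrite E. pose proof (Rabs_pos x). nra.
Qed.

Lemma dchi_comp_bound (x y s r : R) :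
  0 < s -> 0 < r -> r * r = s -> x * x + y * y = s -> Rabs x <= r -> Rabs y <= r ->
  Rabs ((Am x + Am y) * (-1 / (s * s) * (2 * x)) + / s * Am' x) * r <= 4.
Proof.
  intros Hs Hr E Es Hx Hy.
  pose proof (Am_range x); pose proof (Am_range y).
  assert (Nb : Am x + Am y <= s) by lra.
  pose proof (Am'_bound x).
  replace ((Am x + Am y) * (-1 / (s * s) * (2 * x)) + / s * Am' x)
    with (- (2 * x * (Am x + Am y) * / s * / s) + / s * Am' x) by (field; lra).
  set (is := / s). assert (Ei : s * is = 1) by (unfold is; field; lra).
  assert (His : 0 < is) by (unfold is; apply Rinv_0_lt_compat; auto).
  eapply Rle_trans. apply Rmult_le_compat_r; [lra| apply Rabs_triang].
  rewrite Rabs_Ropp. rewrite !Rabs_mult.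
  rewrite (Rabs_right 2) by lra. rewrite (Rabs_right (Am x + Am y)) by lra. rewrite (Rabs_right is) by lra.
  pose proof (Rabs_pos x). pose proof (Rabs_pos (Am' x)).
  assert (T1 : 2 * Rabs x * (Am x + Am y) * is * is * r <= 2).
  { apply Rle_trans with (2 * r * s * is * is * r).
    - assert (0 <= is * is * r) by nra.
      assert (2 * Rabs x * (Am x + Am y) <= 2 * r * s) by (apply Rmult_le_compat; nra).
      replace (2 * Rabs x * (Am x + Am y) * is * is * r) with ((2 * Rabs x * (Am x + Am y)) * (is * is * r)) by ring.
      replace (2 * r * s * is * is * r) with ((2 * r * s) * (is * is * r)) by ring.
      apply Rmult_le_compat_r; auto.
    - replace (2 * r * s * is * is * r) with (2 * (r * r) * (s * is) * is) by ring. rewrite E, Ei.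
      replace (2 * s * 1 * is) with (2 * (s * is)) by ring. rewrite Ei. lra. }
  assert (T2 : is * Rabs (Am' x) * r <= 2).
  { apply Rle_trans with (is * (2 * r) * r).
    - apply Rmult_le_compat_r; [lra|]. apply Rmult_le_compat_l; lra.
    - replace (is * (2 * r) * r) with (2 * ((r * r) * is)) by ring. rewrite E, Ei. lra. }
  nra.
Qed.

Lemma dchi_bound q : q <> O2 ->
  Rabs (fst (dchi q)) * dist2 q O2 <= 4 /\ Rabs (snd (dchi q)) * dist2 q O2 <= 4.
Proof.
  intros N. pose proof (sq2_pos q N) as Hs. pose proof (dist2_pos q O2 N) as Hr.
  assert (E : dist2 q O2 * dist2 q O2 = sq2 q).
  { unfold dist2, O2; simpl. rewrite sqrt_sqrt. unfold sq2; ring. nra. }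
  pose proof (dist2_fst q O2); pose proof (dist2_snd q O2). unfold O2 in *; simpl in *.
  rewrite Rminus_0_r in *.
  unfold dchi; simpl. split.
  - apply dchi_comp_bound; auto.
  - replace (Am (fst q) + Am (snd q)) with (Am (snd q) + Am (fst q)) by ring.
    apply dchi_comp_bound; auto. unfold sq2; ring.
Qed.

Definition KK (q : R2) : Prop := Q1 q \/ Q3 q.

Lemma ngt_ngt q : ngt (ngt q) = q.
Proof. unfold ngt; simpl. rewrite !Ropp_involutive. destruct q; reflexivity. Qed.

Lemma Q1_ngt q : Q1 q -> Q3 (ngt q).
Proof. unfold Q1, Q3, ngt; simpl. intros. lra. Qed.
Lemma Q3_ngt q : Q3 q -> Q1 (ngt q).
Proof. unfold Q1, Q3, ngt; simpl. intros. lra. Qed.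

Lemma O2_Q1 : Q1 O2.
Proof. unfold Q1, O2; simpl; lra. Qed.
Lemma O2_Q3 : Q3 O2.
Proof. unfold Q3, O2; simpl; lra. Qed.

Lemma glue0_HG g2 : HG (fun _ => True) g2 (0, 0) O2 -> g2 O2 = 0 ->
  HG (fun _ => True) (fun y => chi y * g2 y) (0, 0) O2.
Proof.
  intros H Z eps He. destruct (H eps He) as [d [Hd Hy]]. exists d; split; auto.
  intros y Ay N Hdy. specialize (Hy y Ay N Hdy). cbv beta in *. rewrite Z in *.
  unfold inner2, sub2 in *; simpl in *.
  assert (Hy' : Rabs (g2 y) <= eps * dist2 y O2) by (replace (g2 y) with (g2 y - 0 - (0 * (fst y - 0) + 0 * (snd y - 0))) by ring; exact Hy).
  replace (chi y * g2 y - chi O2 * 0 - (0 * (fst y - 0) + 0 * (snd y - 0))) with (chi y * g2 y) by ring.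
  rewrite Rabs_mult. pose proof (chi_range y). rewrite (Rabs_right (chi y)) by lra.
  pose proof (Rabs_pos (g2 y)). nra.
Qed.

Lemma glue0_CW g2 (c : R2 -> R) (sel : R2 -> R) :
  HG (fun _ => True) g2 (0, 0) O2 -> g2 O2 = 0 -> CW Rdist (fun _ => True) c O2 -> c O2 = 0 ->
  (forall q, q <> O2 -> Rabs (sel q) * dist2 q O2 <= 4) ->
  CW Rdist (fun _ => True) (fun y => chi y * c y + g2 y * sel y) O2.
Proof.
  intros H Z C D0 Bd eps He.
  destruct (C (eps/2) ltac:(lra)) as [d1 [Hd1 Hy1]].
  destruct (H (eps/8) ltac:(lra)) as [d2 [Hd2 Hy2]].
  exists (Rmin d1 d2); split; [apply Rmin_pos; auto|].
  intros y _ Hdy. pose proof (Rmin_l d1 d2); pose proof (Rmin_r d1 d2).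
  unfold Rdist. rewrite D0, Z.
  replace (chi O2 * 0 + 0 * sel O2) with 0 by ring. rewrite Rminus_0_r.
  destruct (Classical_Prop.classic (y = O2)) as [E|N].
  - subst y. rewrite Z, D0. replace (chi O2 * 0 + 0 * sel O2) with 0 by ring. rewrite Rabs_R0. lra.
  - specialize (Hy1 y I ltac:(lra)). unfold Rdist in Hy1. rewrite D0, Rminus_0_r in Hy1.
    specialize (Hy2 y I N ltac:(lra)). rewrite Z in Hy2.
    assert (Hy2' : Rabs (g2 y) <= eps / 8 * dist2 O2 y).
    { rewrite dist2_sym. eapply Rle_trans; [|exact Hy2]. right. f_equal. unfold inner2, sub2; simpl; ring. }
    clear Hy2. rename Hy2' into Hy2.
    specialize (Bd y N).
    eapply Rle_lt_trans; [apply Rabs_triang|]. rewrite !Rabs_mult.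
    pose proof (chi_range y). rewrite (Rabs_right (chi y)) by lra.
    pose proof (Rabs_pos (c y)). pose proof (Rabs_pos (sel y)). pose proof (Rabs_pos (g2 y)).
    pose proof (dist2_nonneg O2 y). rewrite (dist2_sym y O2) in Bd.
    assert (chi y * Rabs (c y) < eps / 2) by nra.
    assert (Rabs (g2 y) * Rabs (sel y) <= eps / 8 * dist2 O2 y * Rabs (sel y)) by (apply Rmult_le_compat_r; auto).
    assert (eps / 8 * dist2 O2 y * Rabs (sel y) <= eps / 8 * 4).
    { replace (eps / 8 * dist2 O2 y * Rabs (sel y)) with (eps / 8 * (Rabs (sel y) * dist2 O2 y)) by ring.
      apply Rmult_le_compat_l; lra. }
    lra.
Qed.

Lemma extend f df : (forall x, KK x -> HG KK f (df x) x /\ CW dist2 KK df x) ->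
  exists g, C1_plane g /\ forall x, KK x -> g x = f x.
Proof.
  intros Hf.
  assert (Q1K : forall q, Q1 q -> KK q) by (intros; left; auto).
  assert (Q3K : forall q, Q3 q -> KK q) by (intros; right; auto).
  destruct (sq_ext f df) as [G1 E1].
  { intros p Hp. destruct (Hf p (Q1K p Hp)) as [A B]. split; [eapply HG_sub| eapply CW_sub]; eauto. }
  set (g1 := sqE f) in *. set (dg1 := dsqE df) in *.
  set (f2 := fun q => f q + -1 * g1 q).
  set (df2 := fun q => (fst (df q) + -1 * fst (dg1 q), snd (df q) + -1 * snd (dg1 q))).
  assert (H2 : forall p, Q3 p -> HG Q3 f2 (df2 p) p /\ CW dist2 Q3 df2 p).
  { intros p Hp. destruct (Hf p (Q3K p Hp)) as [A B]. destruct (G1 p) as [A1 B1]. split.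
    - eapply HG_eqd; [| apply HG_plus; [eapply HG_sub; [exact Q3K| exact A]| apply HG_scal; eapply HG_sub; [|exact A1]; auto]].
      reflexivity. all: intros; exact I.
    - apply CWv_pair.
      + apply CW_plus. apply CWv_fst. eapply CW_sub; eauto.
        apply (CW_mult _ (fun _ => -1)); [apply CW_const|]. apply CWv_fst. eapply CW_sub; [|exact B1]; intros; exact I.
      + apply CW_plus. apply CWv_snd. eapply CW_sub; eauto.
        apply (CW_mult _ (fun _ => -1)); [apply CW_const|]. apply CWv_snd. eapply CW_sub; [|exact B1]; intros; exact I. }
  set (h3 := fun q => f2 (ngt q)). set (dh3 := fun q => ngt (df2 (ngt q))).
  destruct (sq_ext h3 dh3) as [G3 E3].
  { intros p Hp. destruct (H2 (ngt p) (Q1_ngt p Hp)) as [A B].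
    destruct (neg_C1 Q3 f2 df2 p (Q1_ngt p Hp) A B) as [A' B'].
    split; [eapply HG_sub| eapply CW_sub]; [| exact A' | | exact B']; intros y Hy; apply Q1_ngt; auto. }
  set (G := sqE h3) in *. set (dG := dsqE dh3) in *.
  set (g2 := fun q => G (ngt q)). set (dg2 := fun q => ngt (dG (ngt q))).
  assert (HG2 : forall p, HG (fun _ => True) g2 (dg2 p) p /\ CW dist2 (fun _ => True) dg2 p).
  { intros p. destruct (G3 (ngt p)) as [A B]. apply (neg_C1 (fun _ => True) G dG p I A B). }
  assert (E2 : forall p, Q3 p -> g2 p = f2 p /\ dg2 p = df2 p).
  { intros p Hp. destruct (E3 (ngt p) (Q3_ngt p Hp)) as [A B]. unfold g2, dg2. rewrite A, B.
    unfold h3, dh3. rewrite !ngt_ngt. auto. }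
  assert (Z : g2 O2 = 0 /\ dg2 O2 = (0, 0)).
  { destruct (E2 O2 O2_Q3) as [A B]. destruct (E1 O2 O2_Q1) as [C D]. rewrite A, B.
    unfold f2, df2. rewrite C, D. split; [ring|]. f_equal; ring. }
  destruct Z as [Z1 Z2].
  assert (HG2O : HG (fun _ => True) g2 (0, 0) O2) by (rewrite <- Z2; apply HG2).
  exists (fun q => g1 q + chi q * g2 q). split.
  - exists (fun q => (fst (dg1 q) + (chi q * fst (dg2 q) + g2 q * fst (dchi q)),
                      snd (dg1 q) + (chi q * snd (dg2 q) + g2 q * snd (dchi q)))).
    intros x. destruct (G1 x) as [A1 B1]. destruct (HG2 x) as [A2 B2].
    destruct (Classical_Prop.classic (x = O2)) as [E|N].
    + subst x. split.
      * eapply HG_eqd; [| apply HG_plus; [exact A1| apply glue0_HG; auto]].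
        rewrite Z1, Z2. simpl. f_equal; ring.
      * apply CWv_pair.
        -- apply CW_plus; [apply CWv_fst; auto|]. apply glue0_CW; auto.
           ++ apply (CWv_fst _ dg2); auto.
           ++ rewrite Z2; reflexivity.
           ++ intros q Nq. apply (dchi_bound q Nq).
        -- apply CW_plus; [apply CWv_snd; auto|]. apply glue0_CW; auto.
           ++ apply (CWv_snd _ dg2); auto.
           ++ rewrite Z2; reflexivity.
           ++ intros q Nq. apply (dchi_bound q Nq).
    + pose proof (chi_HG x N) as Hc. pose proof (chi_CW x N) as Cc. split.
      * eapply HG_eqd; [| apply HG_plus; [exact A1| apply HG_mult; [exact Hc| exact A2]]].
        simpl. f_equal; ring.
      * pose proof (HG_CW _ _ _ _ Hc). pose proof (HG_CW _ _ _ _ A2).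
        apply CWv_pair.
        -- apply CW_plus; [apply CWv_fst; auto|]. apply CW_plus; apply CW_mult; auto; [apply (CWv_fst _ dg2); auto| apply (CWv_fst _ dchi); auto].
        -- apply CW_plus; [apply CWv_snd; auto|]. apply CW_plus; apply CW_mult; auto; [apply (CWv_snd _ dg2); auto| apply (CWv_snd _ dchi); auto].
  - intros x [Hx|Hx].
    + rewrite chi_Q1 by auto. destruct (E1 x Hx) as [A _]. rewrite A. ring.
    + destruct (Classical_Prop.classic (x = O2)) as [E|N].
      * subst x. rewrite Z1. destruct (E1 O2 O2_Q1) as [A _]. rewrite A. ring.
      * rewrite chi_Q3 by auto. destruct (E2 x Hx) as [A _]. rewrite A. unfold f2. ring.
Qed.

Definition lin (a b : R2) (s : R) : R2 := (fst a + s * (fst b - fst a), snd a + s * (snd b - snd a)).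

Lemma norm_hom l u1 u2 : sqrt ((l * u1) ^ 2 + (l * u2) ^ 2) = Rabs l * sqrt (u1 ^ 2 + u2 ^ 2).
Proof.
  replace ((l * u1) ^ 2 + (l * u2) ^ 2) with (l ^ 2 * (u1 ^ 2 + u2 ^ 2)) by ring.
  rewrite sqrt_mult_alt by (apply sq_nonneg). rewrite <- abs_sqrt_sq. reflexivity.
Qed.

Lemma dist_lin a b s t : dist2 (lin a b s) (lin a b t) = Rabs (s - t) * dist2 b a.
Proof.
  unfold dist2, lin; cbn [fst snd]. rewrite <- norm_hom. f_equal. ring.
Qed.

Lemma dist_lin0 a b s : dist2 (lin a b s) a = Rabs s * dist2 b a.
Proof.
  unfold dist2, lin; cbn [fst snd]. rewrite <- norm_hom. f_equal. ring.
Qed.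

Lemma dist_convex p q x0 s : 0 <= s <= 1 ->
  dist2 (lin p q s) x0 <= (1 - s) * dist2 p x0 + s * dist2 q x0.
Proof.
  intros Hs. unfold dist2, lin; cbn [fst snd].
  replace (fst p + s * (fst q - fst p) - fst x0) with ((1 - s) * (fst p - fst x0) + s * (fst q - fst x0)) by ring.
  replace (snd p + s * (snd q - snd p) - snd x0) with ((1 - s) * (snd p - snd x0) + s * (snd q - snd x0)) by ring.
  eapply Rle_trans; [apply norm_tri|]. rewrite !norm_hom.
  rewrite (Rabs_right (1 - s)) by lra. rewrite (Rabs_right s) by lra. lra.
Qed.

Lemma line_deriv f d a b s : HG (fun _ => True) f d (lin a b s) ->
  derivable_pt_lim (fun u => f (lin a b u)) s (inner2 d (sub2 b a)).
Proof.
  intros H eps He.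
  set (w := dist2 b a). assert (Hw : 0 <= w) by apply dist2_nonneg.
  destruct (H (eps / (2 * (w + 1)))) as [del [Hd Hy]].
  { apply Rdiv_lt_0_compat; lra. }
  exists (mkposreal (del / (w + 1)) ltac:(apply Rdiv_lt_0_compat; lra)).
  intros h Hh Hhd. simpl in Hhd.
  assert (Dh : dist2 (lin a b (s + h)) (lin a b s) = Rabs h * w) by (rewrite dist_lin; replace (s + h - s) with h by ring; reflexivity).
  assert (Hlt : Rabs h * w < del).
  { apply Rle_lt_trans with (Rabs h * (w + 1)). apply Rmult_le_compat_l; [apply Rabs_pos| lra].
    apply Rlt_le_trans with (del / (w + 1) * (w + 1)). apply Rmult_lt_compat_r; lra. right; field; lra. }
  assert (Key : Rabs (f (lin a b (s + h)) - f (lin a b s) - h * inner2 d (sub2 b a)) <= eps / (2 * (w + 1)) * (Rabs h * w)).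
  { destruct (Classical_Prop.classic (lin a b (s + h) = lin a b s)) as [E|N].
    - rewrite E. replace (f (lin a b s) - f (lin a b s) - h * inner2 d (sub2 b a)) with (- (h * inner2 d (sub2 b a))) by ring.
      assert (w = 0).
      { pose proof (dist_lin a b (s + h) s). rewrite E, dist2_refl in H0. replace (s + h - s) with h in H0 by ring. fold w in H0.
        assert (0 < Rabs h) by (apply Rabs_pos_lt; auto). nra. }
      assert (Rabs (inner2 d (sub2 b a)) <= nL d * w) by apply inner_bound.
      rewrite H0 in *. rewrite Rabs_Ropp, Rabs_mult. assert (Rabs (inner2 d (sub2 b a)) = 0) by (pose proof (Rabs_pos (inner2 d (sub2 b a))); nra).
      rewrite H2. nra.
    - rewrite <- Dh. eapply Rle_trans; [| apply (Hy (lin a b (s + h)) I N); lra].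
      right. f_equal. unfold inner2, sub2, lin; simpl. ring. }
  replace ((f (lin a b (s + h)) - f (lin a b s)) / h - inner2 d (sub2 b a))
    with ((f (lin a b (s + h)) - f (lin a b s) - h * inner2 d (sub2 b a)) / h) by (field; auto).
  unfold Rdiv. rewrite Rabs_mult, Rabs_inv.
  assert (0 < Rabs h) by (apply Rabs_pos_lt; auto).
  apply Rle_lt_trans with (eps / (2 * (w + 1)) * (Rabs h * w) * / Rabs h).
  { apply Rmult_le_compat_r; auto. left; apply Rinv_0_lt_compat; auto. }
  replace (eps / (2 * (w + 1)) * (Rabs h * w) * / Rabs h) with (eps * (w / (2 * (w + 1)))) by (field; lra).
  assert (w / (2 * (w + 1)) < 1).
  { assert (E : w / (2 * (w + 1)) * (2 * (w + 1)) = w) by (field; lra). nra. }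
  nra.
Qed.

Definition Bx (c : R) (q : R2) : Prop := c <= fst q <= c + 1 /\ c <= snd q <= c + 1.
Definition OBx (c : R) (q : R2) : Prop := c < fst q < c + 1 /\ c < snd q < c + 1.

Lemma lin0 a b : lin a b 0 = a.
Proof. unfold lin. destruct a; simpl. f_equal; ring. Qed.
Lemma lin1 a b : lin a b 1 = b.
Proof. unfold lin. destruct a, b; simpl. f_equal; ring. Qed.

Lemma conv_lo lo x y s : lo < x -> lo < y -> 0 <= s <= 1 -> lo < (1 - s) * x + s * y.
Proof.
  intros. destruct (Rlt_or_le s 1).
  - assert (0 < (1 - s) * (x - lo)) by (apply Rmult_lt_0_compat; lra).
    assert (0 <= s * (y - lo)) by (apply Rmult_le_pos; lra). nra.
  - assert (s = 1) by lra. subst. lra.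
Qed.

Lemma conv_hi hi x y s : x < hi -> y < hi -> 0 <= s <= 1 -> (1 - s) * x + s * y < hi.
Proof.
  intros. pose proof (conv_lo (- hi) (- x) (- y) s ltac:(lra) ltac:(lra) H1). lra.
Qed.

Lemma OBx_lin c a b s : OBx c a -> OBx c b -> 0 <= s <= 1 -> OBx c (lin a b s).
Proof.
  unfold OBx, lin; simpl. intros [[? ?] [? ?]] [[? ?] [? ?]] ?.
  replace (fst a + s * (fst b - fst a)) with ((1 - s) * fst a + s * fst b) by ring.
  replace (snd a + s * (snd b - snd a)) with ((1 - s) * snd a + s * snd b) by ring.
  repeat split; first [apply conv_lo | apply conv_hi]; auto.
Qed.

Lemma inner_sub p v w : inner2 (sub2 p v) w = inner2 p w - inner2 v w.
Proof. unfold inner2, sub2; simpl; ring. Qed.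

Lemma coreA f df c a b v M : OBx c a -> OBx c b -> (forall z, OBx c z -> HG (fun _ => True) f (df z) z) ->
  (forall s, 0 <= s <= 1 -> nL (sub2 (df (lin a b s)) v) <= M) ->
  Rabs (f b - f a - inner2 v (sub2 b a)) <= M * dist2 b a.
Proof.
  intros Ha Hb Hd HM.
  set (K := inner2 v (sub2 b a)).
  destruct (MVT_cor2 (fun u => f (lin a b u) - (K * u + 0)) (fun u => inner2 (df (lin a b u)) (sub2 b a) - K) 0 1) as [c0 [E Hc]].
  { lra. }
  { intros u Hu. apply (derivable_pt_lim_minus (fun u => f (lin a b u)) (fun u => K * u + 0)).
    - apply line_deriv. apply Hd. apply OBx_lin; auto.
    - apply dpl_lin. }
  rewrite lin0, lin1 in E.
  replace (f b - f a - K) with (f b - (K * 1 + 0) - (f a - (K * 0 + 0))) by ring. rewrite E.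
  unfold K. rewrite <- inner_sub. replace (1 - 0) with 1 by ring. rewrite Rmult_1_r.
  eapply Rle_trans; [apply inner_bound|]. apply Rmult_le_compat_r; [apply dist2_nonneg|]. apply HM. lra.
Qed.

Definition mid (c : R) : R2 := (c + 1/2, c + 1/2).

Lemma Bx_shrink c a t : Bx c a -> 0 < t <= 1 -> OBx c (lin a (mid c) t).
Proof.
  unfold Bx, OBx, lin, mid; simpl. intros [[? ?] [? ?]] ?.
  replace (fst a + t * (c + 1 / 2 - fst a)) with ((1 - t) * fst a + t * (c + 1/2)) by ring.
  replace (snd a + t * (c + 1 / 2 - snd a)) with ((1 - t) * snd a + t * (c + 1/2)) by ring.
  repeat split; nra.
Qed.

Lemma OBx_Bx c q : OBx c q -> Bx c q.
Proof. unfold OBx, Bx. intros. lra. Qed.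

Lemma dist_mid c a : Bx c a -> dist2 (mid c) a <= 1.
Proof.
  intros [[? ?] [? ?]]. eapply Rle_trans; [apply dist2_L1|]. unfold mid; simpl.
  assert (Rabs (c + 1/2 - fst a) <= 1/2) by (apply Rabs_le; lra).
  assert (Rabs (c + 1/2 - snd a) <= 1/2) by (apply Rabs_le; lra). lra.
Qed.

Lemma dist_shrink a b m t : dist2 (lin b m t) (lin a m t) = Rabs (1 - t) * dist2 b a.
Proof.
  unfold dist2, lin; cbn [fst snd]. rewrite <- norm_hom. f_equal. ring.
Qed.

Lemma abs4 P Q S T : Rabs (P - Q + S - T) <= Rabs P + Rabs Q + Rabs S + Rabs T.
Proof.
  unfold Rminus. eapply Rle_trans; [apply Rabs_triang|]. rewrite Rabs_Ropp.
  eapply Rle_trans; [apply Rplus_le_compat_r; apply Rabs_triang|].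
  eapply Rle_trans; [apply Rplus_le_compat_r; apply Rplus_le_compat_r; apply Rabs_triang|].
  rewrite Rabs_Ropp. lra.
Qed.

Lemma coreB f df c x0 v M rho a b :
  (forall z, OBx c z -> HG (fun _ => True) f (df z) z) ->
  (forall q, Bx c q -> forall eta, 0 < eta -> exists del, 0 < del /\
      forall y, Bx c y -> dist2 y q < del -> Rabs (f y - f q) < eta) ->
  (forall z, Bx c z -> dist2 z x0 < rho -> nL (sub2 (df z) v) <= M) ->
  Bx c a -> Bx c b -> dist2 a x0 < rho / 2 -> dist2 b x0 < rho / 2 -> 0 <= M ->
  Rabs (f b - f a - inner2 v (sub2 b a)) <= M * dist2 b a.
Proof.
  intros Hd Hc HM Ha Hb Da Db HM0.
  apply Rle_plus_epsilon. intros eta He.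
  destruct (Hc a Ha (eta/3) ltac:(lra)) as [da [Hda Ca]].
  destruct (Hc b Hb (eta/3) ltac:(lra)) as [db [Hdb Cb]].
  set (K := inner2 v (sub2 b a)).
  assert (Hrho : 0 < rho) by (pose proof (dist2_nonneg a x0); lra).
  set (t := Rmin (Rmin (1/2) (rho/4)) (Rmin (Rmin (da/2) (db/2)) (eta / (3 * (Rabs K + 1))))).
  assert (HK : 0 < 3 * (Rabs K + 1)) by (pose proof (Rabs_pos K); lra).
  assert (Ht : 0 < t) by (unfold t; repeat apply Rmin_pos; try lra; apply Rdiv_lt_0_compat; lra).
  assert (Ht1 : t <= 1/2) by (unfold t; eapply Rle_trans; apply Rmin_l).
  assert (Ht2 : t <= rho/4) by (unfold t; eapply Rle_trans; [apply Rmin_l| apply Rmin_r]).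
  assert (Ht3 : t <= da/2) by (unfold t; eapply Rle_trans; [apply Rmin_r| eapply Rle_trans; [apply Rmin_l| apply Rmin_l]]).
  assert (Ht4 : t <= db/2) by (unfold t; eapply Rle_trans; [apply Rmin_r| eapply Rle_trans; [apply Rmin_l| apply Rmin_r]]).
  assert (Ht5 : t <= eta / (3 * (Rabs K + 1))) by (unfold t; eapply Rle_trans; [apply Rmin_r| apply Rmin_r]).
  set (at_ := lin a (mid c) t). set (bt := lin b (mid c) t).
  assert (Oa : OBx c at_) by (apply Bx_shrink; auto; lra).
  assert (Ob : OBx c bt) by (apply Bx_shrink; auto; lra).
  assert (Dat : dist2 at_ a <= t).
  { unfold at_. rewrite dist_lin0. rewrite Rabs_right by lra. pose proof (dist_mid c a Ha). nra. }
  assert (Dbt : dist2 bt b <= t).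
  { unfold bt. rewrite dist_lin0. rewrite Rabs_right by lra. pose proof (dist_mid c b Hb). nra. }
  assert (A1 : Rabs (f bt - f at_ - inner2 v (sub2 bt at_)) <= M * dist2 bt at_).
  { apply (coreA f df c); auto. intros s Hs. apply HM.
    - apply OBx_Bx. apply OBx_lin; auto.
    - eapply Rle_lt_trans; [apply dist_convex; auto|].
      assert (dist2 at_ x0 <= rho/2 + t) by (pose proof (dist2_tri at_ a x0); lra).
      assert (dist2 bt x0 <= rho/2 + t) by (pose proof (dist2_tri bt b x0); lra).
      nra. }
  assert (Dba : dist2 bt at_ <= dist2 b a).
  { unfold bt, at_. rewrite dist_shrink. rewrite Rabs_right by lra. pose proof (dist2_nonneg b a). nra. }
  assert (Ikey : inner2 v (sub2 bt at_) = (1 - t) * K).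
  { unfold K, bt, at_, inner2, sub2, lin; simpl. ring. }
  assert (Fa : Rabs (f at_ - f a) < eta / 3) by (apply Ca; [apply OBx_Bx; auto| lra]).
  assert (Fb : Rabs (f bt - f b) < eta / 3) by (apply Cb; [apply OBx_Bx; auto| lra]).
  assert (TK : t * Rabs K <= eta / 3).
  { apply Rle_trans with (eta / (3 * (Rabs K + 1)) * Rabs K).
    - apply Rmult_le_compat_r; auto. apply Rabs_pos.
    - assert (E : eta / (3 * (Rabs K + 1)) * (3 * (Rabs K + 1)) = eta) by (field; pose proof (Rabs_pos K); lra).
      pose proof (Rabs_pos K).
      assert (0 < eta / (3 * (Rabs K + 1))) by (apply Rdiv_lt_0_compat; lra). nra. }
  replace (f b - f a - K) with ((f bt - f at_ - inner2 v (sub2 bt at_)) - (f bt - f b) + (f at_ - f a) - t * K)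
    by (rewrite Ikey; ring).
  assert (Rabs (t * K) <= eta / 3) by (rewrite Rabs_mult, (Rabs_right t) by lra; auto).
  assert (M * dist2 bt at_ <= M * dist2 b a) by (apply Rmult_le_compat_l; auto).
  pose proof (abs4 (f bt - f at_ - inner2 v (sub2 bt at_)) (f bt - f b) (f at_ - f a) (t * K)).
  lra.
Qed.

Lemma Q1_Bx q : Q1 q <-> Bx 0 q.
Proof. unfold Q1, Bx. split; intros; lra. Qed.
Lemma Q3_Bx q : Q3 q <-> Bx (-1) q.
Proof. unfold Q3, Bx. split; intros; lra. Qed.

Lemma KK_Bx c q : (c = 0 \/ c = -1) -> Bx c q -> KK q.
Proof. intros [->| ->] H; [left; apply Q1_Bx| right; apply Q3_Bx]; auto. Qed.

Lemma OBx_int c z : (c = 0 \/ c = -1) -> OBx c z -> interior2 KK z.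
Proof.
  intros Hc [[H1 H2] [H3 H4]].
  exists (Rmin (Rmin (fst z - c) (c + 1 - fst z)) (Rmin (snd z - c) (c + 1 - snd z))).
  split; [repeat apply Rmin_pos; lra|].
  intros y Hy. rewrite dist2_sym in Hy. apply (KK_Bx c); auto.
  pose proof (fst_gap1 y z); pose proof (fst_gap2 y z); pose proof (snd_gap1 y z); pose proof (snd_gap2 y z).
  pose proof (Rmin_l (Rmin (fst z - c) (c + 1 - fst z)) (Rmin (snd z - c) (c + 1 - snd z))).
  pose proof (Rmin_r (Rmin (fst z - c) (c + 1 - fst z)) (Rmin (snd z - c) (c + 1 - snd z))).
  pose proof (Rmin_l (fst z - c) (c + 1 - fst z)). pose proof (Rmin_r (fst z - c) (c + 1 - fst z)).
  pose proof (Rmin_l (snd z - c) (c + 1 - snd z)). pose proof (Rmin_r (snd z - c) (c + 1 - snd z)).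
  unfold Bx. lra.
Qed.

Lemma nL_sub_le p q : nL (sub2 p q) <= 2 * dist2 p q.
Proof. unfold nL, sub2; simpl. pose proof (dist2_fst p q); pose proof (dist2_snd p q). lra. Qed.

Lemma cross_dist x y : Q1 x -> Q3 y -> dist2 x O2 <= dist2 y x /\ dist2 y O2 <= dist2 y x.
Proof.
  unfold Q1, Q3, dist2, O2; simpl. intros [[? ?] [? ?]] [[? ?] [? ?]].
  split; apply sqrt_le_1_alt; nra.
Qed.

Lemma int_to_K f df :
  (forall z, interior2 KK z -> HG (fun _ => True) f (df z) z) ->
  (forall q, KK q -> CW Rdist KK f q) ->
  (forall q, KK q -> CW dist2 KK df q) ->
  forall x, KK x -> HG KK f (df x) x.
Proof.
  intros Hd Hc HC x Hx eps He.
  destruct (HC x Hx (eps/4) ltac:(lra)) as [rho [Hrho Hr]].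
  set (M := eps / 2).
  assert (HM : forall z, KK z -> dist2 z x < rho -> nL (sub2 (df z) (df x)) <= M).
  { intros z Kz Dz. specialize (Hr z Kz Dz). pose proof (nL_sub_le (df z) (df x)). unfold M. lra. }
  assert (CB : forall c, (c = 0 \/ c = -1) -> forall a b, Bx c a -> Bx c b -> dist2 a x < rho / 2 -> dist2 b x < rho / 2 ->
     Rabs (f b - f a - inner2 (df x) (sub2 b a)) <= M * dist2 b a).
  { intros c Hc0 a b Ha Hb Da Db. apply (coreB f df c x (df x) M rho); auto.
    - intros z Hz. apply Hd. apply (OBx_int c); auto.
    - intros q Hq eta Heta. destruct (Hc q (KK_Bx c q Hc0 Hq) eta Heta) as [d [Hd0 Hy]].
      exists d; split; auto. intros y Hy1 Hy2. apply Hy; auto. apply (KK_Bx c); auto.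
    - intros z Hz Dz. apply HM; auto. apply (KK_Bx c); auto.
    - unfold M; lra. }
  assert (Hx0 : dist2 x x < rho / 2) by (rewrite dist2_refl; lra).
  exists (rho / 2). split; [lra|]. intros y Hy Nyx Dyx.
  assert (HD : 0 <= dist2 y x) by apply dist2_nonneg.
  assert (Cross : forall c1 c2 x' y', (c1 = 0 \/ c1 = -1) -> (c2 = 0 \/ c2 = -1) -> Bx c1 x' -> Bx c2 y' ->
      Bx c1 O2 -> Bx c2 O2 -> dist2 x' O2 <= dist2 y x -> dist2 y' O2 <= dist2 y x ->
      dist2 x' x < rho / 2 -> dist2 y' x < rho / 2 -> dist2 O2 x < rho / 2 ->
      Rabs (f y' - f x' - inner2 (df x) (sub2 y' x')) <= eps * dist2 y x).
  { intros c1 c2 x' y' H1 H2 Bx' By' B1 B2 Dx' Dy' Ex' Ey' EO.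
    pose proof (CB c2 H2 O2 y' B2 By' EO Ey') as A.
    pose proof (CB c1 H1 O2 x' B1 Bx' EO Ex') as B.
    replace (f y' - f x' - inner2 (df x) (sub2 y' x'))
      with ((f y' - f O2 - inner2 (df x) (sub2 y' O2)) - (f x' - f O2 - inner2 (df x) (sub2 x' O2)))
      by (unfold inner2, sub2, O2; simpl; ring).
    eapply Rle_trans; [apply Rabs_triang|]. rewrite Rabs_Ropp.
    assert (0 <= M) by (unfold M; lra).
    assert (M * dist2 y' O2 <= M * dist2 y x) by (apply Rmult_le_compat_l; auto).
    assert (M * dist2 x' O2 <= M * dist2 y x) by (apply Rmult_le_compat_l; auto).
    unfold M in *. lra. }
  assert (B10 : Bx 0 O2) by (apply Q1_Bx; apply O2_Q1).
  assert (B30 : Bx (-1) O2) by (apply Q3_Bx; apply O2_Q3).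
  destruct Hx as [Hx|Hx]; destruct Hy as [Hy|Hy].
  - pose proof (CB 0 (or_introl eq_refl) x y (proj1 (Q1_Bx x) Hx) (proj1 (Q1_Bx y) Hy) Hx0 Dyx).
    assert (M * dist2 y x <= eps * dist2 y x) by (apply Rmult_le_compat_r; unfold M; lra). lra.
  - destruct (cross_dist x y Hx Hy) as [D1 D2].
    apply (Cross 0 (-1)); auto; try (apply Q1_Bx; auto); try (apply Q3_Bx; auto); try lra.
    rewrite dist2_sym; lra.
  - destruct (cross_dist y x Hy Hx) as [D1 D2]. rewrite (dist2_sym x y) in D1, D2.
    apply (Cross (-1) 0); auto; try (apply Q1_Bx; auto); try (apply Q3_Bx; auto); try lra.
    rewrite dist2_sym; lra.
  - pose proof (CB (-1) (or_intror eq_refl) x y (proj1 (Q3_Bx x) Hx) (proj1 (Q3_Bx y) Hy) Hx0 Dyx).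
    assert (M * dist2 y x <= eps * dist2 y x) by (apply Rmult_le_compat_r; unfold M; lra). lra.
Qed.

Lemma C1_equiv f : (C1_int KK f <-> C1_K KK f) /\ (C1_K KK f <-> C1_restr KK f).
Proof.
  split; split.
  - intros [df [H1 [H2 H3]]]. exists df. intros x Kx. split; auto. apply int_to_K; auto.
  - intros [df H]. exists df. split; [|split].
    + intros x [r [Hr Hb]]. assert (Kx : KK x) by (apply Hb; rewrite dist2_refl; auto).
      apply (HG_open KK f (df x) x r); auto. apply H; auto.
    + intros x Kx. apply (HG_CW _ _ (df x)). apply H; auto.
    + intros x Kx. apply H; auto.
  - intros [df H]. apply (extend f df). auto.
  - intros [g [[dg Hg] E]]. exists dg. intros x Kx. destruct (Hg x) as [A B]. split.
    + apply (HG_ext _ g); auto. eapply HG_sub; [|exact A]. intros; exact I.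
    + eapply CW_sub; [|exact B]. intros; exact I.
Qed.

Lemma sup_lemma (a b : R) (C : R -> Prop) : a <= b -> C a ->
  (forall s, a <= s <= b -> exists r, 0 < r /\ forall t1 t2, a <= t1 -> s - r < t1 -> t1 <= s -> C t1 ->
      s <= t2 -> t2 < s + r -> t2 <= b -> C t2) -> C b.
Proof.
  intros Hab Ca Loc.
  set (E := fun t => a <= t <= b /\ C t).
  destruct (completeness E) as [m [Ub Lub]].
  { exists b. intros t [Ht _]. lra. }
  { exists a. split; auto. lra. }
  assert (Ham : a <= m) by (apply Ub; split; auto; lra).
  assert (Hmb : m <= b) by (apply Lub; intros t [Ht _]; lra).
  destruct (Loc m (conj Ham Hmb)) as [r [Hr L]].
  assert (Ex : exists t1, E t1 /\ m - r < t1).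
  { apply NNPP. intros N. assert (m <= m - r); [|lra].
    apply Lub. intros t Et. apply Rnot_lt_le. intros Hlt. apply N. exists t; auto. }
  destruct Ex as [t1 [[Ht1 Ct1] Ht1']].
  assert (t1 <= m) by (apply Ub; split; auto).
  assert (Hm : m = b).
  { destruct (Req_dec m b) as [|N]; auto. exfalso.
    set (t2 := Rmin (m + r/2) b).
    assert (m < t2) by (unfold t2; apply Rmin_glb_lt; lra).
    assert (t2 <= b) by (unfold t2; apply Rmin_r).
    assert (t2 <= m + r / 2) by (unfold t2; apply Rmin_l).
    assert (E t2) by (split; [lra| apply (L t1 t2); try lra; auto]).
    specialize (Ub t2 H3). lra. }
  subst m. apply (L t1 b); auto; lra.
Qed.

Definition cover_by {I : Type} (U : I -> R2 -> Prop) (l : list I) (P : R2 -> Prop) :=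
  forall p, P p -> exists i, In i l /\ U i p.

Lemma ball_box (U : R2 -> Prop) (z : R2) r : 0 < r -> (forall y, dist2 z y < r -> U y) ->
  forall p, Rabs (fst p - fst z) < r / 2 -> Rabs (snd p - snd z) < r / 2 -> U p.
Proof.
  intros Hr Hb p H1 H2. apply Hb. rewrite dist2_sym. eapply Rle_lt_trans; [apply dist2_L1|]. lra.
Qed.

Lemma box_compact c : compact2 (Bx c).
Proof.
  intros I U Hop Hcov.
  assert (Inner : forall y0, c <= y0 <= c + 1 -> exists eta, 0 < eta /\ exists l,
     cover_by U l (fun p => c <= fst p <= c + 1 /\ Rabs (snd p - y0) <= eta /\ c <= snd p <= c + 1)).
  { intros y0 Hy0.
    set (Cin := fun t => exists eta, 0 < eta /\ exists l,
       cover_by U l (fun p => c <= fst p <= t /\ Rabs (snd p - y0) <= eta /\ c <= snd p <= c + 1)).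
    assert (Cf : Cin (c + 1)).
    { apply (sup_lemma c (c + 1)); [lra| |].
      - destruct (Hcov (c, y0)) as [i0 Hi0]. { unfold Bx; simpl; lra. }
        destruct (Hop i0 _ Hi0) as [r0 [Hr0 Hb0]].
        exists (r0 / 4). split; [lra|]. exists (i0 :: nil). intros p [Hp1 [Hp2 Hp3]].
        exists i0. split; [left; auto|]. apply (ball_box _ _ r0 Hr0 Hb0); simpl.
        + replace (fst p - c) with 0 by lra. rewrite Rabs_R0. lra.
        + lra.
      - intros s Hs. destruct (Hcov (s, y0)) as [i Hi]. { unfold Bx; simpl; lra. }
        destruct (Hop i _ Hi) as [r [Hr Hb]].
        exists (r / 2). split; [lra|]. intros t1 t2 Ht1 Ht1' Ht1'' [eta1 [He1 [l1 Cov1]]] Ht2 Ht2' Ht2b.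
        exists (Rmin eta1 (r / 4)). split; [apply Rmin_pos; lra|]. exists (i :: l1).
        intros p [Hp1 [Hp2 Hp3]]. pose proof (Rmin_l eta1 (r/4)). pose proof (Rmin_r eta1 (r/4)).
        destruct (Rle_dec (fst p) t1).
        + destruct (Cov1 p) as [j [Hj Uj]]. { repeat split; lra. }
          exists j. split; [right; auto| auto].
        + exists i. split; [left; auto|]. apply (ball_box _ _ r Hr Hb); simpl.
          * apply Rabs_def1; lra.
          * lra. }
    destruct Cf as [eta [He [l Cov]]]. exists eta. split; auto. exists l.
    intros p [Hp1 [Hp2 Hp3]]. apply Cov. repeat split; lra. }
  set (Cout := fun t => exists l, cover_by U l (fun p => c <= fst p <= c + 1 /\ c <= snd p <= t)).
  assert (Cf : Cout (c + 1)).
  { apply (sup_lemma c (c + 1)); [lra| |].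
    - destruct (Inner c) as [eta [He [l Cov]]]. { lra. }
      exists l. intros p [Hp1 Hp2]. apply Cov. split; auto. split; [|lra].
      replace (snd p - c) with 0 by lra. rewrite Rabs_R0. lra.
    - intros s Hs. destruct (Inner s Hs) as [eta [He [ls Covs]]].
      exists eta. split; auto. intros t1 t2 Ht1 Ht1' Ht1'' [l1 Cov1] Ht2 Ht2' Ht2b.
      exists (l1 ++ ls). intros p [Hp1 Hp2].
      destruct (Rle_dec (snd p) t1).
      + destruct (Cov1 p) as [j [Hj Uj]]. { split; auto; lra. }
        exists j. split; auto. apply in_or_app; auto.
      + destruct (Covs p) as [j [Hj Uj]]. { split; auto. split; [left; apply Rabs_def1; lra| lra]. }
        exists j. split; auto. apply in_or_app; auto. }
  destruct Cf as [l Cov]. exists l. intros x Hx. apply Cov. exact Hx.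
Qed.

Lemma KK_compact : compact2 KK.
Proof.
  intros I U Hop Hcov.
  destruct (box_compact 0 I U Hop) as [l1 C1].
  { intros x Hx. apply Hcov. apply (KK_Bx 0); auto. }
  destruct (box_compact (-1) I U Hop) as [l2 C2].
  { intros x Hx. apply Hcov. apply (KK_Bx (-1)); auto. }
  exists (l1 ++ l2). intros x [Hx|Hx].
  - destruct (C1 x) as [i [Hi Ui]]. { apply Q1_Bx; auto. }
    exists i; split; auto. apply in_or_app; auto.
  - destruct (C2 x) as [i [Hi Ui]]. { apply Q3_Bx; auto. }
    exists i; split; auto. apply in_or_app; auto.
Qed.

Lemma KK_seg x s : KK x -> 0 <= s <= 1 -> KK (lin O2 x s).
Proof.
  unfold KK, Q1, Q3, lin, O2; simpl. intros [[[? ?] [? ?]]|[[? ?] [? ?]]] ?; [left|right]; repeat split; nra.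
Qed.

Lemma conn_aux (U V : R2 -> Prop) : is_open U -> is_open V ->
  (forall x, KK x -> U x \/ V x) -> (forall x, KK x -> U x -> V x -> False) ->
  U O2 -> forall x, KK x -> U x.
Proof.
  intros HU HV Cov Dis U0 x Kx.
  set (C := fun t => forall s, 0 <= s <= t -> U (lin O2 x s)).
  assert (C1 : C 1).
  { apply (sup_lemma 0 1); [lra| |].
    - intros s Hs. replace s with 0 by lra. rewrite lin0. auto.
    - intros s0 Hs0. set (z := lin O2 x s0).
      assert (Kz : KK z) by (apply KK_seg; auto).
      set (w := dist2 x O2). assert (Hw : 0 <= w) by apply dist2_nonneg.
      destruct (Cov z Kz) as [Uz|Vz].
      + destruct (HU z Uz) as [r [Hr Hb]].
        exists (r / (w + 1)). split; [apply Rdiv_lt_0_compat; lra|].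
        intros t1 t2 Ht1 Ht1' Ht1'' Ct1 Ht2 Ht2' Ht2b s Hs.
        destruct (Rle_dec s t1); [apply Ct1; lra|].
        apply Hb. unfold z. rewrite dist_lin. fold w.
        assert (Rabs (s0 - s) < r / (w + 1)) by (apply Rabs_def1; lra).
        apply Rle_lt_trans with (r / (w + 1) * w).
        * apply Rmult_le_compat_r; lra.
        * assert (E : r / (w + 1) * (w + 1) = r) by (field; lra).
          assert (0 < r / (w + 1)) by (apply Rdiv_lt_0_compat; lra). nra.
      + destruct (HV z Vz) as [r [Hr Hb]].
        exists (r / (w + 1)). split; [apply Rdiv_lt_0_compat; lra|].
        intros t1 t2 Ht1 Ht1' Ht1'' Ct1 Ht2 Ht2' Ht2b. exfalso.
        apply (Dis (lin O2 x t1)).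
        * apply KK_seg; auto; lra.
        * apply Ct1; lra.
        * apply Hb. unfold z. rewrite dist_lin. fold w.
          assert (Rabs (s0 - t1) < r / (w + 1)) by (apply Rabs_def1; lra).
          apply Rle_lt_trans with (r / (w + 1) * w).
          -- apply Rmult_le_compat_r; lra.
          -- assert (E : r / (w + 1) * (w + 1) = r) by (field; lra).
             assert (0 < r / (w + 1)) by (apply Rdiv_lt_0_compat; lra). nra. }
  rewrite <- (lin1 O2 x). apply C1. lra.
Qed.

Lemma KK_connected : connected2 KK.
Proof.
  intros U V HU HV Cov Dis.
  assert (K0 : KK O2) by (left; apply O2_Q1).
  destruct (Cov O2 K0) as [U0|V0].
  - left. apply (conn_aux U V); auto.
  - right. apply (conn_aux V U); auto.
    + intros x Kx. destruct (Cov x Kx); auto.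
    + intros x Kx H1 H2. apply (Dis x Kx H2 H1).
Qed.

Lemma box_closed c x : (forall r, 0 < r -> exists y, Bx c y /\ dist2 x y < r) -> Bx c x.
Proof.
  intros H. unfold Bx. repeat split; apply Rnot_lt_le; intros Hlt.
  - destruct (H (c - fst x) ltac:(lra)) as [y [[[? ?] _] D]]. rewrite dist2_sym in D. pose proof (fst_gap1 y x). lra.
  - destruct (H (fst x - (c + 1)) ltac:(lra)) as [y [[[? ?] _] D]]. rewrite dist2_sym in D. pose proof (fst_gap2 y x). lra.
  - destruct (H (c - snd x) ltac:(lra)) as [y [[_ [? ?]] D]]. rewrite dist2_sym in D. pose proof (snd_gap1 y x). lra.
  - destruct (H (snd x - (c + 1)) ltac:(lra)) as [y [[_ [? ?]] D]]. rewrite dist2_sym in D. pose proof (snd_gap2 y x). lra.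
Qed.

Lemma KK_closed x : (forall r, 0 < r -> exists y, KK y /\ dist2 x y < r) -> KK x.
Proof.
  intros H.
  destruct (classic (forall r, 0 < r -> exists y, Bx 0 y /\ dist2 x y < r)) as [A|A].
  - left. apply Q1_Bx. apply box_closed; auto.
  - right. apply Q3_Bx. apply box_closed.
    apply not_all_ex_not in A. destruct A as [r1 A]. apply imply_to_and in A. destruct A as [Hr1 A].
    intros r Hr. destruct (H (Rmin r r1) (Rmin_pos _ _ Hr Hr1)) as [y [[Ky|Ky] D]].
    + exfalso. apply A. exists y. split; [apply Q1_Bx; auto|]. eapply Rlt_le_trans; [exact D| apply Rmin_r].
    + exists y. split; [apply Q3_Bx; auto|]. eapply Rlt_le_trans; [exact D| apply Rmin_l].
Qed.

Lemma KK_regular : topologically_regular KK.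
Proof.
  intros x. split.
  - intros Kx r Hr.
    assert (Hc : exists c, (c = 0 \/ c = -1) /\ Bx c x).
    { destruct Kx as [Kx|Kx]; [exists 0; split; [left; auto| apply Q1_Bx; auto]| exists (-1); split; [right; auto| apply Q3_Bx; auto]]. }
    destruct Hc as [c [Hc Bc]].
    set (t := Rmin (1/2) (r/2)).
    assert (Ht : 0 < t) by (apply Rmin_pos; lra).
    assert (Ht1 : t <= 1/2) by apply Rmin_l. assert (Ht2 : t <= r/2) by apply Rmin_r.
    exists (lin x (mid c) t). split.
    + apply (OBx_int c); auto. apply Bx_shrink; auto. lra.
    + rewrite dist2_sym, dist_lin0, Rabs_right by lra. pose proof (dist_mid c x Bc). nra.
  - intros Hc. apply KK_closed. intros r Hr. destruct (Hc r Hr) as [y [[s [Hs Hb]] D]].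
    exists y. split; auto. apply Hb. rewrite dist2_refl. auto.
Qed.

Lemma no_axis q : interior2 KK q -> fst q = 0 -> False.
Proof.
  intros [r [Hr Hb]] E. destruct (Rle_dec 0 (snd q)).
  - assert (K : KK (- (r/4), snd q + r/4)).
    { apply Hb. eapply Rle_lt_trans; [apply dist2_L1|]. simpl. rewrite E.
      replace (0 - - (r/4)) with (r/4) by ring. replace (snd q - (snd q + r/4)) with (-(r/4)) by ring.
      rewrite Rabs_Ropp, Rabs_right by lra. lra. }
    destruct K as [[[? ?] _]|[_ [? ?]]]; simpl in *; lra.
  - assert (K : KK (r/4, snd q - r/4)).
    { apply Hb. eapply Rle_lt_trans; [apply dist2_L1|]. simpl. rewrite E.
      replace (0 - r/4) with (-(r/4)) by ring. replace (snd q - (snd q - r/4)) with (r/4) by ring.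
      rewrite Rabs_Ropp, Rabs_right by lra. lra. }
    destruct K as [[_ [? ?]]|[[? ?] _]]; simpl in *; lra.
Qed.

Definition clamp (t : R) : R := Rmax 0 (Rmin t 1).

Lemma clamp_range t : 0 <= clamp t <= 1.
Proof. unfold clamp, Rmax, Rmin. destruct (Rle_dec t 1); destruct (Rle_dec 0 _); lra. Qed.

Lemma clamp_id t : 0 <= t <= 1 -> clamp t = t.
Proof. intros. unfold clamp, Rmax, Rmin. destruct (Rle_dec t 1); [|lra]. destruct (Rle_dec 0 t); lra. Qed.

Lemma clamp_lip u t : Rabs (clamp u - clamp t) <= Rabs (u - t).
Proof.
  unfold clamp, Rmax, Rmin.
  destruct (Rle_dec u 1); destruct (Rle_dec t 1);
  repeat match goal with |- context [Rle_dec ?a ?b] => destruct (Rle_dec a b) end;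
  unfold Rabs; repeat match goal with |- context [Rcase_abs ?a] => destruct (Rcase_abs a) end; lra.
Qed.

Lemma not_whitney : ~ whitney_regular (interior2 KK).
Proof.
  intros [C [HC H]].
  assert (Ix : interior2 KK (1/2, 1/2)) by (apply (OBx_int 0); [left; auto| unfold OBx; simpl; lra]).
  assert (Iy : interior2 KK (-1/2, -1/2)) by (apply (OBx_int (-1)); [right; auto| unfold OBx; simpl; lra]).
  destruct (H _ _ Ix Iy) as [gamma [Hc [H0 [H1 [Hin _]]]]].
  set (phi := fun t => - fst (gamma (clamp t))).
  assert (Cphi : continuity phi).
  { intros t. unfold continuity_pt, continue_in, limit1_in, limit_in. intros eps He. simpl.
    destruct (Hc (clamp t) (clamp_range t) eps He) as [del [Hd Hdel]].
    exists del. split; auto. intros x [_ Hx]. unfold Rfunctions.Rdist in *.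
    pose proof (clamp_lip x t).
    specialize (Hdel (clamp x) (clamp_range x) ltac:(lra)).
    unfold phi. replace (- fst (gamma (clamp x)) - - fst (gamma (clamp t))) with (- (fst (gamma (clamp x)) - fst (gamma (clamp t)))) by ring.
    rewrite Rabs_Ropp. eapply Rle_lt_trans; [apply dist2_fst| auto]. }
  destruct (IVT phi 0 1 Cphi) as [z [Hz Ez]].
  - lra.
  - unfold phi. rewrite clamp_id by lra. rewrite H0. simpl. lra.
  - unfold phi. rewrite clamp_id by lra. rewrite H1. simpl. lra.
  - unfold phi in Ez. rewrite clamp_id in Ez by lra.
    apply (no_axis (gamma z)); auto. lra.
Qed.


Theorem mainTheorem15 :
  exists K : R2 -> Prop,
    compact2 K /\ connected2 K /\ topologically_regular K /\
    ~ whitney_regular (interior2 K) /\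
    (forall f : R2 -> R, (C1_int K f <-> C1_K K f) /\ (C1_K K f <-> C1_restr K f)).
Proof.
  exists KK. split; [apply KK_compact|]. split; [apply KK_connected|].
  split; [apply KK_regular|]. split; [apply not_whitney|]. apply C1_equiv.
Qed.
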